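(* Let $(a,b,c)$ be a primitive positive definite form of discriminant $\Delta<0$ and let $p$ be any prime. Then $$w\sum_{(A,B,C)\in\Psi_p(a,b,c)}(A,B,C,q)=\left[p-\left(\tfrac{\Delta}{p}\right)\right](a,b,c,q^{p^2})+(a,b,c,q)-P_{p,0}(a,b,c,q).$$
   Context: A form $(a,b,c)$ denotes the $SL(2,\mathbb Z)$-equivalence class of the positive definite form $ax^2+bxy+cy^2$ ($a>0$) of discriminant $b^2-4ac<0$; it is primitive if $\gcd(a,b,c)=1$, and $\mathrm{CL}(\Delta)$ is the set of classes of primitive forms of discriminant $\Delta$. The theta series $(a,b,c,q):=\sum_{(x,y)\in\mathbb Z^2}q^{ax^2+bxy+cy^2}$ (formal power series) depends only on the class; $(a,b,c,q^k)$ is this series with $q\mapsto q^k$. For $m\ge1$, $0\le r<m$: $P_{m,r}\sum_{n\ge0}a(n)q^n=\sum_{n\ge0}a(mn+r)q^{mn+r}$. $\left(\frac{\Delta}{p}\right)$ is the Kronecker symbol. $w=3$ if $\Delta=-3$, $w=2$ if $\Delta=-4$, $w=1$ if $\Delta<-4$. For a prime $p$ and primitive $(a,b,c)$ of discriminant $\Delta$, $\Psi_p(a,b,c)$ is the set of distinct classes of primitive forms occurring in the list $(a,bp,cp^2)$, $(ap^2,\,p(b+2ah),\,ah^2+bh+c)$ ($0\le h<p$) of forms of discriminant $\Delta p^2$ (a subset of $\mathrm{CL}(\Delta p^2)$, depending only on the class of $(a,b,c)$). *)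

(* Defs.v *)
From Stdlib Require Import ZArith List Lia Znumtheory.
Import ListNotations.
Open Scope Z_scope.

Definition form := (Z * Z * Z)%type.
Definition fa (f : form) : Z := fst (fst f).
Definition fb (f : form) : Z := snd (fst f).
Definition fc (f : form) : Z := snd f.

Definition disc (f : form) : Z := fb f ^ 2 - 4 * fa f * fc f.
Definition feval (f : form) (x y : Z) : Z :=
  fa f * x ^ 2 + fb f * x * y + fc f * y ^ 2.

Definition primitive (f : form) : Prop := Z.gcd (Z.gcd (fa f) (fb f)) (fc f) = 1.
Definition pos_def (f : form) : Prop := 0 < fa f /\ disc f < 0.

Definition sl2_equiv (f g : form) : Prop :=
  exists al be ga de : Z, al * de - be * ga = 1 /\
    forall x y : Z, feval g x y = feval f (al * x + be * y) (ga * x + de * y).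

Definition zrange (N : Z) : list Z :=
  map (fun k => Z.of_nat k - N) (seq 0 (Z.to_nat (2 * N + 1))).

Definition series := nat -> Z.

(* For a positive definite form every
   solution satisfies |x|,|y| <= 4(|a|+|c|) n (since 4an >= D y^2 and
   4cn >= D x^2 with D = -disc >= 1), so counting in that box is the full
   count. *)
Definition theta (f : form) : series := fun n =>
  let N := 4 * (Z.abs (fa f) + Z.abs (fc f)) * Z.of_nat n in
  Z.of_nat (length (filter (fun xy => feval f (fst xy) (snd xy) =? Z.of_nat n)
                          (list_prod (zrange N) (zrange N)))).

(* s(q) |-> s(q^k), for k >= 1 *)
Definition subst_pow (k : Z) (s : series) : series := fun n =>
  if Z.of_nat n mod k =? 0 then s (Z.to_nat (Z.of_nat n / k)) else 0.

Definition Pmr (m r : Z) (s : series) : series := fun n =>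
  if Z.of_nat n mod m =? r then s n else 0.

Definition kronecker_prime (D p : Z) : Z :=
  if p =? 2 then
    (if Z.even D then 0
     else if orb (D mod 8 =? 1) (D mod 8 =? 7) then 1 else -1)
  else
    (if D mod p =? 0 then 0
     else if existsb (fun x => (x * x - D) mod p =? 0) (map Z.of_nat (seq 0 (Z.to_nat p)))
          then 1 else -1).

Definition wD (D : Z) : Z := if D =? -3 then 3 else if D =? -4 then 2 else 1.

(* The list of forms defining Psi_p(a,b,c) (before taking primitive classes). *)
Definition psi_list (f : form) (p : Z) : list form :=
  (fa f, fb f * p, fc f * p ^ 2) ::
  map (fun k => let h := Z.of_nat k in
        (fa f * p ^ 2, p * (fb f + 2 * fa f * h), fa f * h ^ 2 + fb f * h + fc f))
      (seq 0 (Z.to_nat p)).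

Definition reps_of_classes (R L : list form) : Prop :=
  (forall F, In F R -> primitive F /\ exists G, In G L /\ sl2_equiv G F) /\
  (forall G, In G L -> primitive G -> exists F, In F R /\ sl2_equiv G F) /\
  (forall i j d, (i < j < length R)%nat -> ~ sl2_equiv (nth i R d) (nth j R d)).

Definition sum_list (l : list Z) : Z := fold_right Z.add 0 l.

(* Main.v *)
Require Import Defs.
From Stdlib Require Import ZArith List Lia Znumtheory ClassicalEpsilon Bool.
Import ListNotations.
Open Scope Z_scope.

Definition box (N : Z) := list_prod (zrange N) (zrange N).
Definition inbox (N : Z) (v : Z*Z) := -N <= fst v <= N /\ -N <= snd v <= N.

Lemma in_zrange x N : In x (zrange N) <-> -N <= x <= N.
Proof.
  unfold zrange; rewrite in_map_iff; split.
  - intros [k [<- Hk]]. apply in_seq in Hk. lia.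
  - intros H. exists (Z.to_nat (x + N)). split; [lia|]. apply in_seq. lia.
Qed.

Lemma in_box N v : In v (box N) <-> inbox N v.
Proof. destruct v as [x y]; unfold box, inbox; rewrite in_prod_iff, !in_zrange; simpl; tauto. Qed.

Lemma NoDup_zrange N : NoDup (zrange N).
Proof.
  unfold zrange. apply NoDup_map_NoDup_ForallPairs; [|apply seq_NoDup].
  intros x y _ _ H. lia.
Qed.

Lemma NoDup_prod {A B} (l : list A) (l' : list B) : NoDup l -> NoDup l' -> NoDup (list_prod l l').
Proof.
  induction 1 as [|x l Hx Hl IH]; intros Hl'; simpl; [constructor|].
  apply NoDup_app.
  - apply NoDup_map_NoDup_ForallPairs; auto. intros u v _ _ H; inversion H; auto.
  - auto.
  - intros [u w] H1 H2. apply in_map_iff in H1. destruct H1 as [y [Hy _]]. inversion Hy; subst.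
    apply in_prod_iff in H2. tauto.
Qed.

Lemma NoDup_box N : NoDup (box N).
Proof. apply NoDup_prod; apply NoDup_zrange. Qed.

Lemma count_bij (P Q : Z*Z -> bool) N1 N2 (phi psi : Z*Z -> Z*Z) :
  (forall v, P v = true -> inbox N1 v) ->
  (forall v, Q v = true -> inbox N2 v) ->
  (forall v, P v = true -> Q (phi v) = true) ->
  (forall v, Q v = true -> P (psi v) = true) ->
  (forall v, P v = true -> psi (phi v) = v) ->
  (forall v, Q v = true -> phi (psi v) = v) ->
  length (filter P (box N1)) = length (filter Q (box N2)).
Proof.
  intros B1 B2 HPQ HQP K1 K2.
  assert (HA : forall M R (phi psi : Z*Z -> Z*Z) N1 N2,
     (forall v, R v = true -> inbox N2 v) ->
     (forall v, M v = true -> R (phi v) = true) ->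
     (forall v, M v = true -> psi (phi v) = v) ->
     (length (filter M (box N1)) <= length (filter R (box N2)))%nat).
  { clear. intros M R phi psi N1 N2 B2 HMR K.
    rewrite <- (length_map phi). apply NoDup_incl_length.
    - apply NoDup_map_NoDup_ForallPairs.
      + intros u v Hu Hv E. apply filter_In in Hu, Hv.
        rewrite <- (K u) by tauto. rewrite <- (K v) by tauto. now rewrite E.
      + apply NoDup_filter, NoDup_box.
    - intros w Hw. apply in_map_iff in Hw. destruct Hw as [u [<- Hu]].
      apply filter_In in Hu. destruct Hu as [_ Hu].
      apply filter_In. split; [apply in_box; apply B2|]; auto. }
  apply Nat.le_antisymm; eapply HA; eauto.
Qed.

Definition zc (P : Z*Z -> bool) (l : list (Z*Z)) : Z := Z.of_nat (length (filter P l)).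

Lemma zc_sum P l : zc P l = sum_list (map (fun v => if P v then 1 else 0) l).
Proof. unfold zc, sum_list in *; induction l as [|x l IH]; simpl; auto. destruct (P x); cbn [filter length map fold_right]; rewrite ?Nat2Z.inj_succ; lia. Qed.

Lemma feval_eq A B C x y : feval (A,B,C) x y = A*x*x + B*x*y + C*y*y.
Proof. unfold feval, fa, fb, fc; cbn [fst snd]; ring. Qed.

Lemma disc_eq A B C : disc (A,B,C) = B*B - 4*A*C.
Proof. unfold disc, fa, fb, fc; cbn [fst snd]; ring. Qed.

Lemma posdef_pos A B C x y : pos_def (A,B,C) -> (x,y) <> (0,0) -> 0 < feval (A,B,C) x y.
Proof.
  unfold pos_def; rewrite disc_eq; unfold fa; cbn [fst snd]; intros [HA HD] Hne; rewrite feval_eq.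
  assert (E : 4*A*(A*x*x + B*x*y + C*y*y) = (2*A*x+B*y)*(2*A*x+B*y) + (4*A*C-B*B)*(y*y)) by ring.
  destruct (Z.eq_dec y 0) as [->|Hy].
  - assert (x <> 0) by (intro; subst; auto). assert (0 < x*x) by nia. ring_simplify. nia.
  - assert (0 < y*y) by (destruct (Z.lt_total y 0) as [h|[h|h]]; [nia|lia|nia]). assert (0 < (4*A*C-B*B)*(y*y)) by (apply Z.mul_pos_pos; lia). assert (0 <= (2*A*x+B*y)*(2*A*x+B*y)) by apply Z.square_nonneg. remember (A * x * x + B * x * y + C * y * y) as val. assert (0 < 4*A*val) by lia. nia.
Qed.

Lemma posdef_bound A B C x y n : pos_def (A,B,C) -> feval (A,B,C) x y = n ->
  inbox (4 * (Z.abs (fa (A,B,C)) + Z.abs (fc (A,B,C))) * n) (x,y).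
Proof.
  unfold pos_def; rewrite disc_eq; unfold fa, fc; cbn [fst snd]; intros [HA HD] Hn; rewrite feval_eq in Hn.
  assert (HC : 0 < C) by nia.
  assert (E1 : 4*A*n = (2*A*x+B*y)*(2*A*x+B*y) + (4*A*C-B*B)*(y*y)) by (subst; ring).
  assert (E2 : 4*C*n = (2*C*y+B*x)*(2*C*y+B*x) + (4*A*C-B*B)*(x*x)) by (subst; ring).
  assert (0 <= (2*A*x+B*y)*(2*A*x+B*y)) by apply Z.square_nonneg. assert (0 <= (2*C*y+B*x)*(2*C*y+B*x)) by apply Z.square_nonneg. assert (0 <= (4*A*C-B*B-1)*(y*y)) by (apply Z.mul_nonneg_nonneg; [lia|apply Z.square_nonneg]). assert (0 <= (4*A*C-B*B-1)*(x*x)) by (apply Z.mul_nonneg_nonneg; [lia|apply Z.square_nonneg]).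
  assert (y*y <= 4*A*n) by nia. assert (x*x <= 4*C*n) by nia.
  assert (Z.abs y <= y*y) by nia. assert (Z.abs x <= x*x) by nia.
  unfold inbox; cbn [fst snd]. rewrite !Z.abs_eq by lia. assert (0 <= n) by nia. assert (4*A*n <= 4*(A+C)*n) by nia. assert (4*C*n <= 4*(A+C)*n) by nia. lia.
Qed.

Definition box_of (F : form) (n : nat) := box (4 * (Z.abs (fa F) + Z.abs (fc F)) * Z.of_nat n).
Definition solb (F : form) (n : Z) := fun v : Z*Z => feval F (fst v) (snd v) =? n.

Lemma theta_zc F n : theta F n = zc (solb F (Z.of_nat n)) (box_of F n).
Proof. reflexivity. Qed.

Lemma theta_bound F n v : pos_def F -> solb F n v = true -> inbox (4 * (Z.abs (fa F) + Z.abs (fc F)) * n) v.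
Proof.
  destruct F as [[A B] C]; destruct v as [x y]; unfold solb; simpl; intros H E.
  apply Z.eqb_eq in E. eapply posdef_bound; eauto.
Qed.

Lemma sl2_sym F G : sl2_equiv F G -> sl2_equiv G F.
Proof.
  intros [al [be [ga [de [Hd H]]]]].
  exists de, (-be), (-ga), al. split; [lia|].
  intros x y. rewrite H. f_equal; [replace x with ((al*de-be*ga)*x) at 1 by (rewrite Hd; ring) | replace y with ((al*de-be*ga)*y) at 1 by (rewrite Hd; ring)]; ring.
Qed.

Lemma sl2_trans F G K : sl2_equiv F G -> sl2_equiv G K -> sl2_equiv F K.
Proof.
  intros [al [be [ga [de [Hd H]]]]] [al' [be' [ga' [de' [Hd' H']]]]].
  exists (al*al' + be*ga'), (al*be' + be*de'), (ga*al' + de*ga'), (ga*be'+de*de').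
  split; [nia|]. intros x y. rewrite H', H. f_equal; ring.
Qed.

Lemma sl2_refl F : sl2_equiv F F.
Proof. exists 1, 0, 0, 1. split; [lia|]. intros; f_equal; ring. Qed.

Lemma sl2_coeffs A B C A' B' C' : sl2_equiv (A,B,C) (A',B',C') ->
  exists al be ga de, al*de - be*ga = 1 /\
   A' = feval (A,B,C) al ga /\ C' = feval (A,B,C) be de /\
   B' = feval (A,B,C) (al+be) (ga+de) - feval (A,B,C) al ga - feval (A,B,C) be de.
Proof.
  intros [al [be [ga [de [Hd H]]]]]. exists al, be, ga, de. split; auto.
  pose proof (H 1 0) as H1. pose proof (H 0 1) as H2. pose proof (H 1 1) as H3.
  rewrite !feval_eq in *.
  repeat split; ring_simplify in H1; ring_simplify in H2; ring_simplify in H3; ring_simplify; lia.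
Qed.

Lemma form_eta (F : form) : F = (fa F, fb F, fc F).
Proof. destruct F as [[A B] C]; reflexivity. Qed.

Lemma sl2_disc F G : sl2_equiv F G -> disc G = disc F.
Proof.
  rewrite (form_eta F), (form_eta G). intros H.
  apply sl2_coeffs in H. destruct H as [al [be [ga [de [Hd [H1 [H2 H3]]]]]]].
  rewrite !disc_eq. rewrite H1, H2, H3. rewrite !feval_eq.
  transitivity ((fb F * fb F - 4 * fa F * fc F) * ((al*de-be*ga)*(al*de-be*ga))); [ring|].
  rewrite Hd; ring.
Qed.

Lemma sl2_posdef F G : sl2_equiv F G -> pos_def F -> pos_def G.
Proof.
  intros H HF. pose proof (sl2_disc _ _ H) as HD.
  unfold pos_def in *. split; [|lia].
  destruct F as [[A B] C]; destruct G as [[A' B'] C'].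
  apply sl2_coeffs in H. destruct H as [al [be [ga [de [Hd [H1 [H2 H3]]]]]]].
  unfold fa; cbn [fst snd]. rewrite H1.
  apply posdef_pos. unfold pos_def; auto.
  intro E; inversion E; subst. lia.
Qed.

Lemma gcd3_div F : (Z.gcd (Z.gcd (fa F) (fb F)) (fc F) | fa F) /\
                   (Z.gcd (Z.gcd (fa F) (fb F)) (fc F) | fb F) /\
                   (Z.gcd (Z.gcd (fa F) (fb F)) (fc F) | fc F).
Proof.
  repeat split.
  - eapply Z.divide_trans; [apply Z.gcd_divide_l|apply Z.gcd_divide_l].
  - eapply Z.divide_trans; [apply Z.gcd_divide_l|apply Z.gcd_divide_r].
  - apply Z.gcd_divide_r.
Qed.

Lemma prim_of_divs F : (forall d, 0 <= d -> (d | fa F) -> (d | fb F) -> (d | fc F) -> d = 1) -> primitive F.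
Proof.
  intros H. unfold primitive. destruct (gcd3_div F) as [h1 [h2 h3]]. apply H; auto. apply Z.gcd_nonneg.
Qed.

Lemma prim_divs F d : primitive F -> (d | fa F) -> (d | fb F) -> (d | fc F) -> (d | 1).
Proof.
  unfold primitive; intros H h1 h2 h3. rewrite <- H. repeat apply Z.gcd_greatest; auto.
Qed.

Lemma sl2_prim F G : sl2_equiv F G -> primitive G -> primitive F.
Proof.
  rewrite (form_eta F), (form_eta G). intros H HG.
  apply sl2_coeffs in H. destruct H as [al [be [ga [de [Hd [H1 [H2 H3]]]]]]].
  apply prim_of_divs. intros d Hd0 ha hb hc. cbn [fa fb fc fst snd] in *.
  assert (D : forall x y, (d | feval (fa F, fb F, fc F) x y)).
  { intros x y; rewrite feval_eq. apply Z.divide_add_r; [apply Z.divide_add_r|];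
    rewrite <- !Z.mul_assoc; apply Z.divide_mul_l; auto. }
  assert (d | 1). { apply (prim_divs _ d HG); cbn [fa fb fc fst snd]; rewrite ?H1, ?H2, ?H3; auto.
    apply Z.divide_sub_r; [apply Z.divide_sub_r|]; auto. }
  apply Z.divide_1_r_nonneg; auto.
Qed.

Lemma sl2_theta F G n : sl2_equiv F G -> pos_def F -> theta F n = theta G n.
Proof.
  intros H HF. pose proof (sl2_posdef _ _ H HF) as HG.
  destruct H as [al [be [ga [de [Hd H]]]]].
  rewrite !theta_zc. unfold zc. f_equal.
  apply (count_bij _ _ _ _ (fun v => (de * fst v - be * snd v, - ga * fst v + al * snd v))
                        (fun v => (al * fst v + be * snd v, ga * fst v + de * snd v))).
  - intros v Hv. apply theta_bound; auto.
  - intros v Hv. apply theta_bound; auto.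
  - intros [x y]; unfold solb; cbn [fst snd]; intros E. apply Z.eqb_eq in E; apply Z.eqb_eq.
    rewrite H. rewrite <- E. f_equal.
    + replace x with ((al*de-be*ga)*x) at 3 by (rewrite Hd; ring). ring.
    + replace y with ((al*de-be*ga)*y) at 3 by (rewrite Hd; ring). ring.
  - intros [x y]; unfold solb; cbn [fst snd]; intros E. rewrite <- H. auto.
  - intros [x y] _; cbn [fst snd]. f_equal.
    + replace x with ((al*de-be*ga)*x) at 3 by (rewrite Hd; ring). ring.
    + replace y with ((al*de-be*ga)*y) at 3 by (rewrite Hd; ring). ring.
  - intros [x y] _; cbn [fst snd]. f_equal.
    + replace x with ((al*de-be*ga)*x) at 3 by (rewrite Hd; ring). ring.
    + replace y with ((al*de-be*ga)*y) at 3 by (rewrite Hd; ring). ring.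
Qed.

Definition mat := (Z*Z*Z*Z)%type.
Definition mapp (m : mat) (v : Z*Z) : Z*Z :=
  let '(m11,m12,m21,m22) := m in (m11 * fst v + m12 * snd v, m21 * fst v + m22 * snd v).
Definition Mmat (p : Z) (i : nat) : mat :=
  match i with O => (1,0,0,p) | S h => (p, Z.of_nat h, 0, 1) end.
Definition vi (i : nat) : Z*Z := match i with O => (1,0) | S h => (Z.of_nat h, 1) end.
Definition ui (i : nat) : Z*Z := match i with O => (1,0) | S h => (0, 1) end.
Definition ell (i : nat) (w : Z*Z) : Z := match i with O => snd w | S h => fst w - Z.of_nat h * snd w end.
Definition inLb (p : Z) (i : nat) (w : Z*Z) : bool := ell i w mod p =? 0.
Definition gi (f : form) (p : Z) (i : nat) : form := nth i (psi_list f p) (0,0,0).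
Definition fv (f : form) (w : Z*Z) := feval f (fst w) (snd w).

Lemma psi_length f p : length (psi_list f p) = S (Z.to_nat p).
Proof. unfold psi_list; simpl. now rewrite length_map, length_seq. Qed.

Lemma nth_map_gen {A B : Type} (F : A -> B) l d d' k : (k < length l)%nat -> nth k (map F l) d = F (nth k l d').
Proof. intros; rewrite nth_indep with (d' := F d'); [apply map_nth| rewrite length_map; auto]. Qed.

Lemma gi_S f p h : (h < Z.to_nat p)%nat ->
  gi f p (S h) = (fa f * p ^ 2, p * (fb f + 2 * fa f * Z.of_nat h),
                  fa f * Z.of_nat h ^ 2 + fb f * Z.of_nat h + fc f).
Proof.
  intros H. unfold gi, psi_list; cbn [nth].
  rewrite nth_map_gen with (d' := 0%nat) by (rewrite length_seq; auto).
  rewrite seq_nth by auto. reflexivity.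
Qed.

Lemma gi_0 f p : gi f p 0 = (fa f, fb f * p, fc f * p ^ 2).
Proof. reflexivity. Qed.

Lemma gi_feval f p i x y : (i <= Z.to_nat p)%nat ->
  feval (gi f p i) x y = fv f (mapp (Mmat p i) (x,y)).
Proof.
  intros Hi. destruct i as [|h].
  - rewrite gi_0. unfold fv, mapp, Mmat, feval, fa, fb, fc; cbn [fst snd]. ring.
  - rewrite gi_S by lia. unfold fv, mapp, Mmat, feval, fa, fb, fc; cbn [fst snd]. ring.
Qed.

Lemma fv_scale f p w : fv f (p * fst w, p * snd w) = p * p * fv f w.
Proof. unfold fv, feval; cbn [fst snd]. ring. Qed.

Lemma vi_M p i : vi i = mapp (Mmat p i) (ui i).
Proof. destruct i; unfold vi, mapp, Mmat, ui; cbn [fst snd]; f_equal; ring. Qed.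

Lemma inLb_iff p i w : 0 < p -> (inLb p i w = true <-> (p | ell i w)).
Proof.
  intros Hp. unfold inLb. rewrite Z.eqb_eq. split.
  - intros H. apply Z.mod_divide; lia.
  - intros H. apply Z.mod_divide; auto; lia.
Qed.

Lemma ell_lin i l z p w : ell i (l * fst w + p * fst z, l * snd w + p * snd z) = l * ell i w + p * ell i z.
Proof. destruct i; unfold ell; cbn [fst snd]; ring. Qed.

Lemma inLb_M p i w : 0 < p -> (inLb p i w = true <-> exists u, w = mapp (Mmat p i) u).
Proof.
  intros Hp. rewrite inLb_iff by auto. destruct w as [x y]. split.
  - intros [k Hk]. destruct i as [|h]; unfold ell in Hk; cbn [fst snd] in Hk.
    + exists (x, k). unfold mapp, Mmat; cbn [fst snd]. f_equal; lia.
    + exists (k, y). unfold mapp, Mmat; cbn [fst snd]. f_equal; lia.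
  - intros [[s t] E]. destruct i as [|h]; unfold mapp, Mmat in E; pose proof (f_equal fst E) as E1; pose proof (f_equal snd E) as E2; cbn [fst snd] in E1, E2;
    unfold ell; cbn [fst snd]; rewrite ?E1, ?E2.
    + exists t; ring.
    + exists s; ring.
Qed.

Lemma inLb_decomp p i w : 0 < p -> inLb p i w = true -> exists l z, w = (l * fst (vi i) + p * fst z, l * snd (vi i) + p * snd z).
Proof.
  intros Hp H. apply inLb_M in H; auto. destruct H as [[s t] ->].
  destruct i as [|h]; unfold mapp, Mmat, vi; cbn [fst snd].
  - exists s, (0, t). cbn [fst snd]. f_equal; ring.
  - exists t, (s, 0). cbn [fst snd]. f_equal; ring.
Qed.

Lemma inLb_vi p i : 0 < p -> inLb p i (vi i) = true.
Proof. intros Hp. apply inLb_iff; auto. destruct i; unfold ell, vi; cbn [fst snd]; exists 0; ring. Qed.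

Lemma inLb_comb p i l z w : 0 < p -> inLb p i w = true ->
  inLb p i (l * fst w + p * fst z, l * snd w + p * snd z) = true.
Proof.
  intros Hp H. apply inLb_iff in H; auto. apply inLb_iff; auto. rewrite ell_lin.
  apply Z.divide_add_r; [apply Z.divide_mul_r|apply Z.divide_factor_l]; auto.
Qed.

Lemma inLb_det p i w w' : 0 < p -> inLb p i w = true -> inLb p i w' = true ->
  (p | fst w * snd w' - snd w * fst w').
Proof.
  intros Hp H H'. apply inLb_iff in H, H'; auto. destruct w as [x y], w' as [x' y'].
  destruct i as [|h]; unfold ell in *; cbn [fst snd] in *.
  - replace (x*y' - y*x') with (x*y' + (-x')*y) by ring.
    apply Z.divide_add_r; apply Z.divide_mul_r; auto.
  - replace (x*y' - y*x') with (y' * (x - Z.of_nat h * y) + (-y)*(x' - Z.of_nat h * y')) by ring.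
    apply Z.divide_add_r; apply Z.divide_mul_r; auto.
Qed.

Definition nz (p : Z) (w : Z*Z) := ~ ((p | fst w) /\ (p | snd w)).

Lemma inLb_unique p i j w : prime p -> nz p w -> (i <= Z.to_nat p)%nat -> (j <= Z.to_nat p)%nat ->
  inLb p i w = true -> inLb p j w = true -> i = j.
Proof.
  intros Hp Hw Hi Hj H1 H2. pose proof (prime_ge_2 _ Hp).
  apply inLb_iff in H1, H2; try lia. destruct w as [x y]; unfold nz in Hw; cbn [fst snd] in *.
  destruct i as [|h], j as [|h']; unfold ell in *; cbn [fst snd] in *; auto.
  - exfalso; apply Hw; split; auto. replace x with ((x - Z.of_nat h' * y) + Z.of_nat h' * y) by ring.
    apply Z.divide_add_r; auto; apply Z.divide_mul_r; auto.
  - exfalso; apply Hw; split; auto. replace x with ((x - Z.of_nat h * y) + Z.of_nat h * y) by ring.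
    apply Z.divide_add_r; auto; apply Z.divide_mul_r; auto.
  - assert (Hd : (p | (Z.of_nat h' - Z.of_nat h) * y)).
    { replace ((Z.of_nat h' - Z.of_nat h) * y) with ((x - Z.of_nat h * y) - (x - Z.of_nat h' * y)) by ring.
      apply Z.divide_sub_r; auto. }
    apply prime_mult in Hd; auto. destruct Hd as [Hd|Hd].
    + destruct (Nat.eq_dec h h') as [->|Hne]; auto.
      destruct Hd as [k Hk]. exfalso.
      assert (k = 0 \/ k >= 1 \/ k <= -1) as [->|[Kk|Kk]] by lia; nia.
    + exfalso; apply Hw; split; auto. replace x with ((x - Z.of_nat h * y) + Z.of_nat h * y) by ring.
      apply Z.divide_add_r; auto; apply Z.divide_mul_r; auto.
Qed.

Lemma inLb_exists p w : prime p -> nz p w -> exists i, (i <= Z.to_nat p)%nat /\ inLb p i w = true.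
Proof.
  intros Hp Hw. pose proof (prime_ge_2 _ Hp). destruct w as [x y]; unfold nz in Hw; cbn [fst snd] in *.
  destruct (Zdivide_dec p y) as [Hy|Hy].
  - exists 0%nat. split; [lia|]. apply inLb_iff; [lia|]. exact Hy.
  - apply prime_rel_prime in Hy; auto. apply rel_prime_bezout in Hy. destruct Hy as [u v E].
    exists (S (Z.to_nat ((x * v) mod p))). split.
    + assert (0 <= (x*v) mod p < p) by (apply Z.mod_pos_bound; lia). lia.
    + apply inLb_iff; [lia|]. unfold ell; cbn [fst snd]. rewrite Z2Nat.id by (apply Z.mod_pos_bound; lia).
      rewrite (Z.mod_eq (x*v) p) by lia.
      exists (x * u + (x * v / p) * y). replace x with (x * (u*p + v*y)) at 1 by (rewrite E; ring). ring.
Qed.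

Definition line (p : Z) (w : Z*Z) : nat :=
  match find (fun i => inLb p i w) (seq 0 (S (Z.to_nat p))) with Some i => i | None => 0%nat end.

Lemma line_spec p w i : prime p -> nz p w -> (i <= Z.to_nat p)%nat ->
  (inLb p i w = true <-> i = line p w).
Proof.
  intros Hp Hw Hi. unfold line.
  destruct (find (fun i => inLb p i w) (seq 0 (S (Z.to_nat p)))) eqn:E.
  - apply find_some in E. destruct E as [Hin E]. apply in_seq in Hin.
    split; [intros H; eapply inLb_unique; eauto; lia| intros ->; auto].
  - exfalso. destruct (inLb_exists p w Hp Hw) as [j [Hj Hj']].
    eapply find_none in E; [rewrite E in Hj'; discriminate|]. apply in_seq; lia.
Qed.

Lemma line_le p w : prime p -> nz p w -> (line p w <= Z.to_nat p)%nat.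
Proof.
  intros Hp Hw. destruct (inLb_exists p w Hp Hw) as [j [Hj Hj']].
  apply line_spec in Hj'; auto. lia.
Qed.

Lemma nz_vi p i : prime p -> nz p (vi i).
Proof.
  intros Hp [H1 H2]. pose proof (prime_ge_2 _ Hp). destruct i; cbn [vi fst snd] in *.
  - apply Z.divide_1_r_nonneg in H1; lia.
  - apply Z.divide_1_r_nonneg in H2; lia.
Qed.

Lemma fv_vi0 f : fv f (vi 0) = fa f.
Proof. unfold fv, vi, feval; cbn [fst snd]; ring. Qed.
Lemma fv_viS f h : fv f (vi (S h)) = fa f * Z.of_nat h ^ 2 + fb f * Z.of_nat h + fc f.
Proof. unfold fv, vi, feval; cbn [fst snd]; ring. Qed.

Lemma gi_posdef f p i : pos_def f -> prime p -> (i <= Z.to_nat p)%nat -> pos_def (gi f p i).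
Proof.
  intros Hf Hp Hi. pose proof (prime_ge_2 _ Hp). destruct f as [[a b] c].
  unfold pos_def in *; rewrite disc_eq in Hf. cbn [fa fst] in Hf.
  assert (0 < p*p) by nia.
  destruct i as [|h]; [rewrite gi_0 | rewrite gi_S by lia]; cbn [fa fb fc fst snd]; rewrite disc_eq; split.
  - lia.
  - replace (b * p * (b * p) - 4 * a * (c * p ^ 2)) with ((b*b - 4*a*c)*(p*p)) by ring. nia.
  - rewrite Z.pow_2_r; nia.
  - match goal with |- ?X < 0 => replace X with ((b*b - 4*a*c)*(p*p)) by ring end. nia.
Qed.

Lemma div_p2 p d : prime p -> 0 <= d -> (d | p * p) -> ~ (p | d) -> d = 1.
Proof.
  intros Hp Hd H Hn. pose proof (prime_ge_2 _ Hp).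
  assert (Hr : rel_prime d p) by (apply rel_prime_sym, prime_rel_prime; auto).
  assert (Hdp : (d | p)) by (eapply Gauss; eauto).
  apply prime_divisors in Hdp; auto.
  destruct Hdp as [E|[E|[E|E]]]; subst; try lia; exfalso; apply Hn; apply Z.divide_refl.
Qed.

Lemma gcd_p2 p d a b c : primitive (a,b,c) -> (d | p*p*a) -> (d | p*p*b) -> (d | p*p*c) -> (d | p*p).
Proof.
  intros Hpr ha hb hc. unfold primitive in Hpr; cbn [fa fb fc fst snd] in Hpr.
  assert (E : Z.gcd (Z.gcd (p*p*a) (p*p*b)) (p*p*c) = p*p).
  { assert (Hpp : Z.abs (p*p) = p*p) by (apply Z.abs_eq; nia).
    rewrite Z.gcd_mul_mono_l, Hpp, Z.gcd_mul_mono_l, Hpr, Hpp. ring. }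
  rewrite <- E. repeat apply Z.gcd_greatest; auto.
Qed.

Lemma gi_prim f p i : primitive f -> prime p -> (i <= Z.to_nat p)%nat ->
  (primitive (gi f p i) <-> ~ (p | fv f (vi i))).
Proof.
  intros Hf Hp Hi. pose proof (prime_ge_2 _ Hp).
  rewrite (form_eta f) in Hf.
  destruct i as [|h]; [rewrite gi_0, fv_vi0 | rewrite gi_S, fv_viS by lia]; split.
  - intros Hpr Hd. assert (p | 1).
    { apply (prim_divs _ p Hpr); cbn [fa fb fc fst snd]; auto.
      - exists (fb f); ring.
      - exists (fc f * p); ring. }
    apply Z.divide_1_r_nonneg in H0; lia.
  - intros Hn. apply prim_of_divs. intros d Hd0 ha hb hc; cbn [fa fb fc fst snd] in ha, hb, hc.
    apply (div_p2 p d Hp Hd0); [|intro Hpd; apply Hn; eapply Z.divide_trans; eauto].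
    apply (gcd_p2 p d (fa f) (fb f) (fc f) Hf).
    + apply Z.divide_mul_r; auto.
    + replace (p*p*fb f) with (p*(fb f * p)) by ring. apply Z.divide_mul_r; auto.
    + replace (p*p*fc f) with (fc f * p^2) by ring. auto.
  - intros Hpr Hd. assert (p | 1).
    { apply (prim_divs _ p Hpr); cbn [fa fb fc fst snd]; auto.
      - exists (fa f * p); ring.
      - exists (fb f + 2 * fa f * Z.of_nat h); ring. }
    apply Z.divide_1_r_nonneg in H0; lia.
  - intros Hn. apply prim_of_divs. intros d Hd0 ha hb hc; cbn [fa fb fc fst snd] in ha, hb, hc.
    apply (div_p2 p d Hp Hd0); [|intro Hpd; apply Hn; eapply Z.divide_trans; eauto].
    apply (gcd_p2 p d (fa f) (fb f) (fc f) Hf).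
    + replace (p*p*fa f) with (fa f * p^2) by ring. auto.
    + replace (p*p*fb f) with (p * (p * (fb f + 2 * fa f * Z.of_nat h)) - 2 * Z.of_nat h * (fa f * p^2)) by ring.
      apply Z.divide_sub_r; apply Z.divide_mul_r; auto.
    + replace (p*p*fc f) with (p*p*(fa f * Z.of_nat h ^ 2 + fb f * Z.of_nat h + fc f)
         - Z.of_nat h * p * (p * (fb f + 2 * fa f * Z.of_nat h)) + Z.of_nat h ^ 2 * (fa f * p^2)) by ring.
      apply Z.divide_add_r; [apply Z.divide_sub_r|]; apply Z.divide_mul_r; auto.
Qed.

Lemma count_bij_list {A B : Type} (l1 : list A) (l2 : list B) (P : A -> bool) (Q : B -> bool)
  (phi : A -> B) (psi : B -> A) :
  NoDup l1 -> NoDup l2 ->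
  (forall x, In x l1 -> P x = true -> In (phi x) l2 /\ Q (phi x) = true) ->
  (forall y, In y l2 -> Q y = true -> In (psi y) l1 /\ P (psi y) = true) ->
  (forall x, In x l1 -> P x = true -> psi (phi x) = x) ->
  (forall y, In y l2 -> Q y = true -> phi (psi y) = y) ->
  length (filter P l1) = length (filter Q l2).
Proof.
  intros N1 N2 H1 H2 K1 K2.
  assert (HA : forall {A B : Type} (l1 : list A) (l2 : list B) (P : A -> bool) (Q : B -> bool)
     (phi : A -> B) (psi : B -> A), NoDup l1 ->
     (forall x, In x l1 -> P x = true -> In (phi x) l2 /\ Q (phi x) = true) ->
     (forall x, In x l1 -> P x = true -> psi (phi x) = x) ->
     (length (filter P l1) <= length (filter Q l2))%nat).
  { clear. intros A B l1 l2 P Q phi psi N1 H1 K1.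
    rewrite <- (length_map phi). apply NoDup_incl_length.
    - apply NoDup_map_NoDup_ForallPairs; [|apply NoDup_filter; auto].
      intros u v Hu Hv E. apply filter_In in Hu, Hv.
      rewrite <- (K1 u), <- (K1 v) by tauto. now rewrite E.
    - intros w Hw. apply in_map_iff in Hw. destruct Hw as [u [<- Hu]].
      apply filter_In in Hu. apply filter_In. apply H1; tauto. }
  apply Nat.le_antisymm; eapply HA; eauto.
Qed.

Lemma count_same {A : Type} (l1 l2 : list A) (P Q : A -> bool) :
  NoDup l1 -> NoDup l2 ->
  (forall x, (In x l1 /\ P x = true) <-> (In x l2 /\ Q x = true)) ->
  length (filter P l1) = length (filter Q l2).
Proof.
  intros N1 N2 H. apply (count_bij_list l1 l2 P Q id id); auto; firstorder.
Qed.

Lemma modp_eq p X h : 0 < p -> (p | X - h) -> 0 <= h < p -> X mod p = h.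
Proof. intros Hp [k Hk] Hh. symmetry. apply Z.mod_unique with k; lia. Qed.

Lemma divb p x : 0 < p -> ((x mod p =? 0) = true <-> (p | x)).
Proof. intros Hp; rewrite Z.eqb_eq; split; intro H; apply Z.mod_divide; auto; lia. Qed.

Lemma divb_false p x : 0 < p -> ((x mod p =? 0) = false <-> ~ (p | x)).
Proof. intros Hp. rewrite <- (divb p x Hp). destruct (x mod p =? 0); split; congruence. Qed.

Definition hl (p : Z) := map Z.of_nat (seq 0 (Z.to_nat p)).
Lemma in_hl p x : In x (hl p) <-> 0 <= x < p.
Proof. unfold hl; rewrite in_map_iff; split.
  - intros [k [<- Hk]]; apply in_seq in Hk; lia.
  - intros H; exists (Z.to_nat x); split; [lia|apply in_seq; lia]. Qed.
Lemma NoDup_hl p : NoDup (hl p).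
Proof. unfold hl. apply NoDup_map_NoDup_ForallPairs; [|apply seq_NoDup]. intros x y _ _ H; lia. Qed.

Lemma sqrt_count p D : prime p -> p <> 2 ->
  Z.of_nat (length (filter (fun x => (x * x - D) mod p =? 0) (hl p))) =
  1 + (if D mod p =? 0 then 0
       else if existsb (fun x => (x * x - D) mod p =? 0) (hl p) then 1 else -1).
Proof.
  intros Hp H2. pose proof (prime_ge_2 _ Hp) as Hp2. assert (Hp0 : 0 < p) by lia.
  destruct (D mod p =? 0) eqn:ED.
  - apply divb in ED; auto.
    rewrite (count_same _ [0] _ (fun _ => true)); [reflexivity|apply NoDup_hl|repeat constructor; simpl; tauto|].
    intros x; rewrite in_hl, divb by auto; simpl; split.
    + intros [Hx Hd]. split; auto. left.
      assert (Hxx : (p | x * x)) by (replace (x*x) with ((x*x - D) + D) by ring; apply Z.divide_add_r; auto).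
      apply prime_mult in Hxx; auto. destruct Hxx as [[k Hk]|[k Hk]]; (assert (k = 0) by (destruct (Z_lt_le_dec k 1); [destruct (Z_lt_le_dec k 0); nia|nia])); subst; lia.
    + intros [[<-|[]] _]. split; [lia|]. replace (0*0-D) with (-1 * D) by ring. apply Z.divide_mul_r; auto.
  - apply divb_false in ED; auto.
    destruct (existsb (fun x => (x * x - D) mod p =? 0) (hl p)) eqn:EX.
    + apply existsb_exists in EX. destruct EX as [x0 [Hx0 E0]]. apply in_hl in Hx0. apply divb in E0; auto.
      assert (Hx0nz : x0 <> 0) by (intro; subst; apply ED; replace D with (-1 * (0*0 - D)) by ring; apply Z.divide_mul_r; auto).
      assert (Hne : p - x0 <> x0).
      { intro E. assert (H2p : (2 | p)) by (exists x0; lia).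
        apply prime_divisors in H2p; auto. lia. }
      rewrite (count_same _ [x0; p - x0] _ (fun _ => true)).
      * reflexivity.
      * apply NoDup_hl.
      * constructor; [simpl; intuition|]. constructor; [simpl; tauto|constructor].
      * intros x; rewrite in_hl, divb by auto; simpl; split.
        -- intros [Hx Hd]. split; auto.
           assert (Hm : (p | (x - x0) * (x + x0))).
           { replace ((x - x0) * (x + x0)) with ((x*x - D) - (x0*x0 - D)) by ring. apply Z.divide_sub_r; auto. }
           apply prime_mult in Hm; auto. destruct Hm as [[k Hk]|[k Hk]].
           ++ left. assert (k = 0) by nia. subst; lia.
           ++ right; left. assert (k = 1) by nia. subst; lia.
        -- intros [[<-|[<-|[]]] _]; split; auto; try lia.
           replace ((p - x0) * (p - x0) - D) with ((x0*x0 - D) + p * (p - 2*x0)) by ring.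
           apply Z.divide_add_r; auto. apply Z.divide_factor_l.
    + rewrite (count_same _ [] _ (fun _ => true)); [reflexivity|apply NoDup_hl|constructor|].
      intros x; simpl; split; [|tauto]. intros [Hx E].
      assert (existsb (fun x => (x * x - D) mod p =? 0) (hl p) = true) by (apply existsb_exists; eauto).
      congruence.
Qed.

Lemma not_div_2a p a : prime p -> p <> 2 -> ~ (p | a) -> ~ (p | 2 * a).
Proof.
  intros Hp H2 Ha H. apply prime_mult in H; auto. destruct H as [H|H]; auto.
  apply prime_divisors in H; [|apply prime_2]. pose proof (prime_ge_2 _ Hp). lia.
Qed.

Lemma quad_count_odd a b c p : prime p -> p <> 2 -> ~ (p | a) ->
  length (filter (fun h => (a*h*h + b*h + c) mod p =? 0) (hl p)) =
  length (filter (fun x => (x*x - (b*b-4*a*c)) mod p =? 0) (hl p)).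
Proof.
  intros Hp H2 Ha. pose proof (prime_ge_2 _ Hp). assert (Hp0 : 0 < p) by lia.
  assert (H2a := not_div_2a p a Hp H2 Ha).
  assert (H4a : ~ (p | 4 * a)) by (replace (4*a) with (2*(2*a)) by ring; apply not_div_2a; auto).
  destruct (rel_prime_bezout _ _ (prime_rel_prime _ Hp _ H2a)) as [u s E].
  apply (count_bij_list _ _ _ _ (fun h => (2*a*h + b) mod p) (fun x => ((x - b) * s) mod p));
    try apply NoDup_hl.
  - intros h Hh Hq. rewrite in_hl. split; [apply Z.mod_pos_bound; lia|].
    apply divb in Hq; auto. apply divb; auto. destruct Hq as [k Hk].
    rewrite Z.mod_eq by lia. set (q := (2*a*h+b)/p).
    assert (Hc : c = k*p - a*h*h - b*h) by lia. subst c.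
    exists (4*a*k - 2*(2*a*h+b)*q + p*q*q). ring.
  - intros x Hx Hq. rewrite in_hl. split; [apply Z.mod_pos_bound; lia|].
    apply divb in Hq; auto. apply divb; auto. destruct Hq as [k Hk].
    rewrite Z.mod_eq by lia. set (q := (x - b) * s / p). set (h := (x - b) * s - p * q).
    set (M := -(x-b)*u - 2*a*q).
    assert (EM : 2*a*h + b - x = p*M).
    { unfold h, M. transitivity ((x-b)*(u*p + s*(2*a) - 1) + p*(-(x-b)*u - 2*a*q)); [ring|rewrite E; ring]. }
    assert (Hdiv : (p | 4*a*(a*h*h + b*h + c))).
    { exists (k + 2*x*M + p*M*M).
      replace (4*a*(a*h*h + b*h + c)) with ((2*a*h+b)*(2*a*h+b) - (b*b-4*a*c)) by ring.
      replace (2*a*h+b) with (x + p*M) by lia. rewrite <- (Z.add_0_r (x*x - _)) in Hk.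
      lia. }
    apply prime_mult in Hdiv; auto. destruct Hdiv; [contradiction|auto].
  - intros h Hh _. apply in_hl in Hh. apply modp_eq; auto.
    rewrite Z.mod_eq by lia. set (q := (2*a*h+b)/p).
    exists (-h*u - q*s).
    transitivity (h*(u*p + s*(2*a) - 1) + (-h*u - q*s)*p); [ring|rewrite E; ring].
  - intros x Hx _. apply in_hl in Hx. apply modp_eq; auto.
    rewrite Z.mod_eq by lia. set (q := (x - b) * s / p).
    exists (-(x-b)*u - 2*a*q).
    transitivity ((x-b)*(u*p + s*(2*a) - 1) + (-(x-b)*u - 2*a*q)*p); [ring|rewrite E; ring].
Qed.

Lemma cong_mod p X Y : 0 < p -> (p | X - Y) -> X mod p = Y mod p.
Proof. intros Hp [k Hk]. replace X with (Y + k * p) by lia. apply Z.mod_add; lia. Qed.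

Lemma count2_residues ra rb rc : 0 <= ra < 8 -> 0 <= rb < 8 -> 0 <= rc < 8 ->
  ~ (ra mod 2 = 0 /\ rb mod 2 = 0 /\ rc mod 2 = 0) ->
  Z.of_nat (length (filter (fun v => v mod 2 =? 0) [ra; rc; ra + rb + rc])) =
  1 + (if ((rb*rb - 4*ra*rc) mod 8) mod 2 =? 0 then 0
       else if orb (((rb*rb - 4*ra*rc) mod 8) =? 1) (((rb*rb - 4*ra*rc) mod 8) =? 7) then 1 else -1).
Proof.
  intros Ha Hb Hc Hn.
  assert (ra = 0 \/ ra = 1 \/ ra = 2 \/ ra = 3 \/ ra = 4 \/ ra = 5 \/ ra = 6 \/ ra = 7) as Ra by lia.
  assert (rb = 0 \/ rb = 1 \/ rb = 2 \/ rb = 3 \/ rb = 4 \/ rb = 5 \/ rb = 6 \/ rb = 7) as Rb by lia.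
  assert (rc = 0 \/ rc = 1 \/ rc = 2 \/ rc = 3 \/ rc = 4 \/ rc = 5 \/ rc = 6 \/ rc = 7) as Rc by lia.
  clear Ha Hb Hc.
  destruct Ra as [->|[->|[->|[->|[->|[->|[->| ->]]]]]]];
  destruct Rb as [->|[->|[->|[->|[->|[->|[->| ->]]]]]]];
  destruct Rc as [->|[->|[->|[->|[->|[->|[->| ->]]]]]]];
  try reflexivity; exfalso; apply Hn; repeat split; reflexivity.
Qed.

Lemma nonprim_count2 a b c : primitive (a,b,c) ->
  Z.of_nat (length (filter (fun v => v mod 2 =? 0) [a; c; a + b + c])) =
  1 + kronecker_prime (b*b - 4*a*c) 2.
Proof.
  intros Hpr. unfold kronecker_prime. cbn [Z.eqb Pos.eqb]. rewrite Zeven_mod.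
  assert (Hn : ~ (a mod 8 mod 2 = 0 /\ b mod 8 mod 2 = 0 /\ c mod 8 mod 2 = 0)).
  { intros [h1 [h2 h3]]. rewrite <- !Zmod_div_mod in h1, h2, h3 by (try lia; exists 4; lia).
    assert (H2 : (2 | 1)).
    { apply (prim_divs _ 2 Hpr); cbn [fa fb fc fst snd]; apply Z.mod_divide; auto; lia. }
    apply Z.divide_1_r_nonneg in H2; lia. }
  assert (E1 : forall v, v mod 2 = (v mod 8) mod 2) by (intros; apply Zmod_div_mod; try lia; exists 4; lia).
  pose proof (Z_div_mod_eq_full a 8) as Ea. pose proof (Z_div_mod_eq_full b 8) as Eb.
  pose proof (Z_div_mod_eq_full c 8) as Ec.
  assert (ED : (b*b - 4*a*c) mod 8 = ((b mod 8)*(b mod 8) - 4*(a mod 8)*(c mod 8)) mod 8).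
  { apply cong_mod; [lia|].
    exists (8*(b/8)*(b/8) + 2*(b/8)*(b mod 8) - 32*(a/8)*(c/8) - 4*(a/8)*(c mod 8) - 4*(a mod 8)*(c/8)).
    rewrite Ea at 1. rewrite Eb at 1 2. rewrite Ec at 1. ring. }
  assert (ES : (a + b + c) mod 8 = ((a mod 8) + (b mod 8) + (c mod 8)) mod 8).
  { apply cong_mod; [lia|]. exists (a/8 + b/8 + c/8). rewrite Ea at 1. rewrite Eb at 1. rewrite Ec at 1. ring. }
  rewrite (Zmod_div_mod 2 8 (b*b-4*a*c)) by (try lia; exists 4; lia).
  rewrite ED.
  transitivity (Z.of_nat (length (filter (fun v => v mod 2 =? 0) [a mod 8; c mod 8; a mod 8 + b mod 8 + c mod 8]))).
  - assert (Pa : a mod 2 = (a mod 8) mod 2) by apply E1.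
    assert (Pc : c mod 2 = (c mod 8) mod 2) by apply E1.
    assert (Ps : (a+b+c) mod 2 = (a mod 8 + b mod 8 + c mod 8) mod 2).
    { rewrite E1, ES, <- E1. reflexivity. }
    cbn [filter]. rewrite Pa, Pc, Ps.
    destruct ((a mod 8) mod 2 =? 0), ((c mod 8) mod 2 =? 0), ((a mod 8 + b mod 8 + c mod 8) mod 2 =? 0); reflexivity.
  - apply count2_residues; try (apply Z.mod_pos_bound; lia). auto.
Qed.

Lemma lin_count a b c p : prime p -> (p | a) -> primitive (a,b,c) ->
  Z.of_nat (length (filter (fun h => (a*h*h + b*h + c) mod p =? 0) (hl p))) =
  (if (b*b - 4*a*c) mod p =? 0 then 0
   else if existsb (fun x => (x * x - (b*b-4*a*c)) mod p =? 0) (hl p) then 1 else -1).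
Proof.
  intros Hp Ha Hpr. pose proof (prime_ge_2 _ Hp). assert (Hp0 : 0 < p) by lia.
  destruct Ha as [ka Hka]. subst a.
  destruct (Zdivide_dec p b) as [Hb|Hb].
  - assert (ED : ((b*b - 4*(ka*p)*c) mod p =? 0) = true).
    { apply divb; auto. destruct Hb as [kb ->]. exists (kb*kb*p - 4*ka*c). ring. }
    rewrite ED. rewrite (count_same _ [] _ (fun _ => true)); [reflexivity|apply NoDup_hl|constructor|].
    intros h; simpl; split; [|tauto]. intros [Hh E]. apply divb in E; auto.
    assert (Hc : (p | c)).
    { destruct Hb as [kb ->]. destruct E as [k Hk]. exists (k - ka*h*h - kb*h). lia. }
    assert (H1 : (p | 1)).
    { apply (prim_divs _ p Hpr); cbn [fa fb fc fst snd]; auto. exists ka; ring. }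
    apply Z.divide_1_r_nonneg in H1; lia.
  - assert (ED : ((b*b - 4*(ka*p)*c) mod p =? 0) = false).
    { apply divb_false; auto. intros HD. apply Hb.
      assert (Hbb : (p | b*b)) by (replace (b*b) with ((b*b - 4*(ka*p)*c) + p * (4*ka*c)) by ring;
                                  apply Z.divide_add_r; [auto|apply Z.divide_factor_l]).
      apply prime_mult in Hbb; auto; tauto. }
    rewrite ED.
    assert (EX : existsb (fun x => (x * x - (b*b-4*(ka*p)*c)) mod p =? 0) (hl p) = true).
    { apply existsb_exists. exists (b mod p). split; [apply in_hl, Z.mod_pos_bound; lia|].
      apply divb; auto. rewrite Z.mod_eq by lia. exists (-2*b*(b/p) + p*(b/p)*(b/p) + 4*ka*c). ring. }
    rewrite EX.
    destruct (rel_prime_bezout _ _ (prime_rel_prime _ Hp _ Hb)) as [u s E].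
    rewrite (count_same _ [(-c*s) mod p] _ (fun _ => true)); [reflexivity|apply NoDup_hl|repeat constructor; simpl; tauto|].
    intros h; rewrite in_hl, divb by auto; simpl; split.
    + intros [Hh [k Hk]]. split; auto. left. apply modp_eq; auto.
      exists (-s*k + s*ka*h*h - h*u).
      transitivity (-s*(ka*p*h*h + b*h + c) + s*ka*p*h*h + h*(u*p + s*b - 1) - h*u*p); [ring|].
      rewrite E, Hk. ring.
    + intros [[<-|[]] _]. split; [apply Z.mod_pos_bound; lia|].
      rewrite Z.mod_eq by lia. set (q := - c * s / p).
      exists (ka * (-c*s - p*q) * (-c*s - p*q) + c*u - b*q).
      transitivity (ka * p * (-c*s - p*q) * (-c*s - p*q) + c*(1 - s*b) - b*p*q); [ring|].
      rewrite <- E. ring.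
Qed.

Lemma nonprim_count a b c p : primitive (a,b,c) -> prime p ->
  Z.of_nat (length (filter (fun i => fv (a,b,c) (vi i) mod p =? 0) (seq 0 (S (Z.to_nat p))))) =
  1 + kronecker_prime (disc (a,b,c)) p.
Proof.
  intros Hpr Hp. pose proof (prime_ge_2 _ Hp). assert (Hp0 : 0 < p) by lia.
  rewrite disc_eq.
  destruct (Z.eq_dec p 2) as [->|H2].
  - change (S (Z.to_nat 2)) with 3%nat. simpl seq.
    rewrite <- nonprim_count2 by auto. f_equal.
    cbn [filter]. rewrite fv_vi0, !fv_viS. cbn [fa fb fc fst snd].
    change (Z.of_nat 0) with 0. change (Z.of_nat 1) with 1.
    replace (a * 0 ^ 2 + b * 0 + c) with c by ring. replace (a * 1 ^ 2 + b * 1 + c) with (a+b+c) by ring.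
    destruct (a mod 2 =? 0), (c mod 2 =? 0), ((a+b+c) mod 2 =? 0); reflexivity.
  - unfold kronecker_prime. replace (p =? 2) with false by (symmetry; apply Z.eqb_neq; auto).
    change (seq 0 (S (Z.to_nat p))) with (0%nat :: seq 1 (Z.to_nat p)). rewrite <- seq_shift. cbn [filter].
    assert (Hl : length (filter (fun i => fv (a, b, c) (vi i) mod p =? 0) (map S (seq 0 (Z.to_nat p))))
                 = length (filter (fun h => (a*h*h + b*h + c) mod p =? 0) (hl p))).
    { rewrite filter_map_swap, length_map. unfold hl. rewrite filter_map_swap, length_map.
      f_equal. apply filter_ext. intros h. rewrite fv_viS. cbn [fa fb fc fst snd]. f_equal. f_equal. ring. }
    rewrite fv_vi0. cbn [fa fst].
    destruct (Zdivide_dec p a) as [Ha|Ha].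
    + replace (a mod p =? 0) with true by (symmetry; apply divb; auto). cbn [length].
      rewrite Nat2Z.inj_succ, Hl, lin_count; auto. unfold hl; lia.
    + replace (a mod p =? 0) with false by (symmetry; apply divb_false; auto).
      rewrite Hl, quad_count_odd, sqrt_count; auto.
Qed.

Lemma sum_cons x l : sum_list (x :: l) = x + sum_list l.
Proof. reflexivity. Qed.

Lemma sum_ext {A} (F G : A -> Z) l : (forall x, In x l -> F x = G x) -> sum_list (map F l) = sum_list (map G l).
Proof. intros H. induction l as [|x l IH]; [reflexivity|]. cbn [map]. rewrite !sum_cons. rewrite H by (left; auto). f_equal. apply IH. intros; apply H; right; auto. Qed.

Lemma sum_add {A} (F G : A -> Z) l : sum_list (map (fun x => F x + G x) l) = sum_list (map F l) + sum_list (map G l).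
Proof. induction l as [|x l IH]; [reflexivity|]. cbn [map]. rewrite !sum_cons, IH. ring. Qed.

Lemma sum_scal {A} (c : Z) (F : A -> Z) l : sum_list (map (fun x => c * F x) l) = c * sum_list (map F l).
Proof. induction l as [|x l IH]; [cbn; ring|]. cbn [map]. rewrite !sum_cons, IH. ring. Qed.

Lemma sum_zero {A} l : sum_list (map (fun _ : A => 0) l) = 0.
Proof. induction l as [|x l IH]; [reflexivity|]. cbn [map]. rewrite sum_cons, IH. ring. Qed.

Lemma sum_swap {A B} (F : A -> B -> Z) l1 l2 :
  sum_list (map (fun i => sum_list (map (fun v => F i v) l2)) l1) =
  sum_list (map (fun v => sum_list (map (fun i => F i v) l1)) l2).
Proof.
  induction l1 as [|i l1 IH]; cbn [map].
  - symmetry. apply sum_zero.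
  - rewrite sum_cons, IH. rewrite <- sum_add. apply sum_ext. intros; rewrite sum_cons; reflexivity.
Qed.

Lemma count_sum {A} (P : A -> bool) l : Z.of_nat (length (filter P l)) = sum_list (map (fun v => if P v then 1 else 0) l).
Proof. induction l as [|x l IH]; [reflexivity|]. cbn [filter map]. rewrite sum_cons. destruct (P x); cbn [length]; rewrite ?Nat2Z.inj_succ; lia. Qed.

Lemma count_negb {A} (P : A -> bool) l : Z.of_nat (length (filter (fun x => negb (P x)) l)) = Z.of_nat (length l) - Z.of_nat (length (filter P l)).
Proof. induction l as [|x l IH]; [reflexivity|]. cbn [filter]. destruct (P x); cbn [negb length]; rewrite ?Nat2Z.inj_succ; lia. Qed.

Lemma sum_single {A} (l : list A) (P : A -> bool) x0 :
  NoDup l -> In x0 l -> (forall x, In x l -> P x = true -> x = x0) ->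
  sum_list (map (fun x => if P x then 1 else 0) l) = if P x0 then 1 else 0.
Proof.
  intros Hn Hin H. rewrite <- count_sum.
  destruct (P x0) eqn:E.
  - rewrite (count_same _ [x0] _ (fun _ => true)); [reflexivity|auto|repeat constructor; simpl; tauto|].
    intros x; simpl; split; [intros [Hx Px]; split; auto; left; symmetry; apply H; auto|].
    intros [[<-|[]] _]; auto.
  - rewrite (count_same _ [] _ (fun _ => true)); [reflexivity|auto|constructor|].
    intros x; simpl; split; [|tauto]. intros [Hx Px]. rewrite (H x Hx Px) in Px. congruence.
Qed.

Section Lat.
Variables (a b c p : Z).
Hypothesis Hf : pos_def (a,b,c).
Hypothesis Hpr : primitive (a,b,c).
Hypothesis Hp : prime p.

Let f : form := (a,b,c).
Let P := Z.to_nat p.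
Definition idx := seq 0 (S (Z.to_nat p)).
Definition primb (i : nat) : bool := negb (fv (a,b,c) (vi i) mod p =? 0).

Definition Minv (i : nat) (v : Z*Z) : Z*Z :=
  match i with O => (fst v, snd v / p) | S h => ((fst v - Z.of_nat h * snd v) / p, snd v) end.

Lemma Minv_M i u : 0 < p -> Minv i (mapp (Mmat p i) u) = u.
Proof.
  intros Hp0. destruct u as [x y]; destruct i as [|h]; unfold Minv, mapp, Mmat; cbn [fst snd]; f_equal; try ring.
  - replace (0 * x + p * y) with (y * p) by ring. apply Z.div_mul; lia.
  - replace (p * x + Z.of_nat h * y - Z.of_nat h * (0 * x + 1 * y)) with (x * p) by ring. apply Z.div_mul; lia.
Qed.

Lemma theta_gi i n : (i <= Z.to_nat p)%nat ->
  theta (gi (a,b,c) p i) n = zc (fun v => andb (solb (a,b,c) (Z.of_nat n) v) (inLb p i v)) (box_of (a,b,c) n).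
Proof.
  intros Hi. pose proof (prime_ge_2 _ Hp). assert (Hp0 : 0 < p) by lia.
  rewrite theta_zc. unfold zc. f_equal.
  apply (count_bij _ _ _ _ (mapp (Mmat p i)) (Minv i)).
  - intros v Hv. apply theta_bound; auto. apply gi_posdef; auto.
  - intros v Hv. apply andb_prop in Hv. apply theta_bound; tauto.
  - intros [x y] Hv. unfold solb in *; cbn [fst snd] in *. rewrite gi_feval in Hv by auto.
    apply andb_true_intro; split; [exact Hv|]. apply inLb_M; eauto.
  - intros v Hv. apply andb_prop in Hv. destruct Hv as [Hv Hl].
    apply inLb_M in Hl; auto. destruct Hl as [u ->]. rewrite Minv_M by auto.
    unfold solb in *. destruct u as [x y]. cbn [fst snd]. rewrite gi_feval by auto. exact Hv.
  - intros v _. apply Minv_M; auto.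
  - intros v Hv. apply andb_prop in Hv. destruct Hv as [_ Hl].
    apply inLb_M in Hl; auto. destruct Hl as [u ->]. rewrite Minv_M by auto. reflexivity.
Qed.

Lemma fv_line_div i v : (i <= Z.to_nat p)%nat -> inLb p i v = true -> nz p v ->
  ((p | fv (a,b,c) v) <-> (p | fv (a,b,c) (vi i))).
Proof.
  intros Hi Hl Hnz. pose proof (prime_ge_2 _ Hp). assert (Hp0 : 0 < p) by lia.
  apply inLb_iff in Hl; auto. destruct v as [x y]. unfold nz in Hnz; cbn [fst snd] in Hnz.
  destruct i as [|h]; unfold ell in Hl; cbn [fst snd] in Hl; destruct Hl as [k Hk];
    unfold fv, feval, vi; cbn [fa fb fc fst snd].
  -
    assert (Hx : ~ (p | x)) by (intro Hx; apply Hnz; split; auto; exists k; auto).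
    rewrite Hk. split.
    + intros Hd. assert (Hd' : (p | a * (x * x))).
      { replace (a * (x*x)) with ((a * x ^ 2 + b * x * (k * p) + c * (k * p) ^ 2) - p * (b*x*k + c*k*k*p)) by ring.
        apply Z.divide_sub_r; [auto|apply Z.divide_factor_l]. }
      apply prime_mult in Hd'; auto. destruct Hd' as [Hd'|Hd']; [replace (a * 1 ^ 2 + b * 1 * 0 + c * 0 ^ 2) with a by ring; auto|].
      apply prime_mult in Hd'; auto. tauto.
    + intros Hd. replace (a * 1 ^ 2 + b * 1 * 0 + c * 0 ^ 2) with a in Hd by ring.
      replace (a * x ^ 2 + b * x * (k * p) + c * (k * p) ^ 2) with (a * (x*x) + p * (b*x*k + c*k*k*p)) by ring.
      apply Z.divide_add_r; [apply Z.divide_mul_l; auto|apply Z.divide_factor_l].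
  -
    assert (Hy : ~ (p | y)).
    { intro Hy; apply Hnz; split; auto. replace x with ((x - Z.of_nat h * y) + Z.of_nat h * y) by ring.
      apply Z.divide_add_r; [exists k; auto|apply Z.divide_mul_r; auto]. }
    replace x with (Z.of_nat h * y + k * p) by lia.
    set (q := a * Z.of_nat h ^ 2 + b * Z.of_nat h * 1 + c * 1 ^ 2).
    replace (a * (Z.of_nat h * y + k * p) ^ 2 + b * (Z.of_nat h * y + k * p) * y + c * y ^ 2)
      with (q * (y*y) + p * (2*a*Z.of_nat h*y*k + a*k*k*p + b*k*y)) by (unfold q; ring).
    split.
    + intros Hd. assert (Hd' : (p | q * (y*y))).
      { replace (q * (y*y)) with ((q * (y*y) + p * (2*a*Z.of_nat h*y*k + a*k*k*p + b*k*y)) - p * (2*a*Z.of_nat h*y*k + a*k*k*p + b*k*y)) by ring.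
        apply Z.divide_sub_r; [auto|apply Z.divide_factor_l]. }
      apply prime_mult in Hd'; auto. destruct Hd' as [Hd'|Hd']; auto.
      apply prime_mult in Hd'; auto. tauto.
    + intros Hd. apply Z.divide_add_r; [apply Z.divide_mul_l; auto|apply Z.divide_factor_l].
Qed.

End Lat.

Section StepL.
Variables (a b c p : Z).
Hypothesis Hf : pos_def (a,b,c).
Hypothesis Hpr : primitive (a,b,c).
Hypothesis Hp : prime p.

Definition pzb (v : Z*Z) : bool := andb (fst v mod p =? 0) (snd v mod p =? 0).

Lemma pzb_true v : 0 < p -> pzb v = true <-> ((p | fst v) /\ (p | snd v)).
Proof. intros Hp0. unfold pzb. rewrite andb_true_iff, !divb by auto. tauto. Qed.

Lemma count_primb : 0 < p ->
  Z.of_nat (length (filter (primb a b c p) (idx p))) = p - kronecker_prime (disc (a,b,c)) p.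
Proof.
  intros Hp0. unfold primb, idx. rewrite count_negb, length_seq.
  pose proof (nonprim_count a b c p Hpr Hp) as E.
  rewrite E. lia.
Qed.

Lemma pointwise n v :
  sum_list (map (fun i => if primb a b c p i then (if andb (solb (a,b,c) (Z.of_nat n) v) (inLb p i v) then 1 else 0) else 0) (idx p))
  = if solb (a,b,c) (Z.of_nat n) v then
      (if pzb v then p - kronecker_prime (disc (a,b,c)) p
       else (if Z.of_nat n mod p =? 0 then 0 else 1))
    else 0.
Proof.
  pose proof (prime_ge_2 _ Hp). assert (Hp0 : 0 < p) by lia.
  destruct (solb (a,b,c) (Z.of_nat n) v) eqn:Es; cbn [andb].
  2:{ transitivity (sum_list (map (fun _ : nat => 0) (idx p))); [apply sum_ext; intros; destruct (primb _ _ _ _ _); auto|apply sum_zero]. }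
  destruct (pzb v) eqn:Ez.
  - apply pzb_true in Ez; auto.
    rewrite <- count_primb by auto. rewrite count_sum. apply sum_ext. intros i Hi.
    replace (inLb p i v) with true; [destruct (primb _ _ _ _ _); auto|].
    symmetry. apply inLb_iff; auto. destruct Ez as [[k1 E1] [k2 E2]]. destruct v as [x y]; cbn [fst snd] in *.
    destruct i as [|h]; unfold ell; cbn [fst snd]; [exists k2; auto| exists (k1 - Z.of_nat h * k2); rewrite E1, E2; ring].
  - assert (Hnz : nz p v) by (unfold nz; rewrite <- pzb_true by auto; congruence).
    transitivity (sum_list (map (fun i => if andb (primb a b c p i) (inLb p i v) then 1 else 0) (idx p))).
    { apply sum_ext; intros i _. destruct (primb _ _ _ _ _), (inLb _ _ _); auto. }
    rewrite (sum_single _ _ (line p v)).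
    + pose proof (line_le p v Hp Hnz) as Hle.
      replace (inLb p (line p v) v) with true by (symmetry; apply line_spec; auto).
      unfold solb in Es; apply Z.eqb_eq in Es.
      unfold primb. rewrite andb_true_r.
      destruct (fv (a,b,c) (vi (line p v)) mod p =? 0) eqn:E1; destruct (Z.of_nat n mod p =? 0) eqn:E2; auto.
      * apply divb in E1; auto. apply divb_false in E2; auto. exfalso; apply E2.
        rewrite <- Es. apply (fv_line_div a b c p Hp (line p v)); auto. apply line_spec; auto.
      * apply divb in E2; auto. apply divb_false in E1; auto. exfalso; apply E1.
        apply (fv_line_div a b c p Hp (line p v) v); auto. apply line_spec; auto.
        unfold fv; rewrite Es; auto.
    + apply seq_NoDup.
    + apply in_seq. pose proof (line_le p v Hp Hnz). lia.
    + intros i Hi Hb. apply andb_prop in Hb. apply in_seq in Hi. apply line_spec; try lia; tauto.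
Qed.

Lemma sum_pz n :
  zc (fun v => andb (solb (a,b,c) (Z.of_nat n) v) (pzb v)) (box_of (a,b,c) n) =
  if Z.of_nat n mod p ^ 2 =? 0 then theta (a,b,c) (Z.to_nat (Z.of_nat n / p ^ 2)) else 0.
Proof.
  pose proof (prime_ge_2 _ Hp). assert (Hp0 : 0 < p) by lia. assert (Hp2 : 0 < p^2) by (apply Z.pow_pos_nonneg; lia).
  destruct (Z.of_nat n mod p ^ 2 =? 0) eqn:E.
  - apply divb in E; auto. destruct E as [m Hm].
    assert (Hm0 : 0 <= m) by nia.
    replace (Z.of_nat n / p^2) with m by (rewrite Hm; rewrite Z.div_mul; lia).
    rewrite theta_zc. unfold zc. f_equal.
    apply (count_bij _ _ _ _ (fun v => (fst v / p, snd v / p)) (fun w => (p * fst w, p * snd w))).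
    + intros v Hv. apply andb_prop in Hv. apply theta_bound; tauto.
    + intros v Hv. apply theta_bound; auto.
    + intros [x y] Hv. apply andb_prop in Hv. destruct Hv as [Hs Hz]. apply pzb_true in Hz; auto.
      cbn [fst snd] in *. destruct Hz as [[k1 ->] [k2 ->]]. rewrite !Z.div_mul by lia.
      unfold solb in *; cbn [fst snd] in *. apply Z.eqb_eq in Hs. apply Z.eqb_eq.
      rewrite Z2Nat.id by auto. rewrite feval_eq in *.
      assert (E : p^2 * (a*k1*k1 + b*k1*k2 + c*k2*k2) = p^2 * m) by (rewrite Z.pow_2_r; nia).
      apply Z.mul_cancel_l in E; lia.
    + intros [x y] Hv. unfold solb in *; cbn [fst snd] in *. apply Z.eqb_eq in Hv.
      rewrite Z2Nat.id in Hv by auto.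
      apply andb_true_intro; split.
      * apply Z.eqb_eq. rewrite feval_eq in *. rewrite Hm, <- Hv. ring.
      * apply pzb_true; auto; cbn [fst snd]; split; apply Z.divide_factor_l.
    + intros [x y] Hv. apply andb_prop in Hv. destruct Hv as [_ Hz]. apply pzb_true in Hz; auto.
      cbn [fst snd] in *. destruct Hz as [[k1 ->] [k2 ->]]. rewrite !Z.div_mul by lia. f_equal; ring.
    + intros [x y] _. cbn [fst snd]. f_equal; rewrite Z.mul_comm, Z.div_mul; lia.
  - apply divb_false in E; auto. unfold zc.
    rewrite (count_same _ [] _ (fun _ => true)); [reflexivity|apply NoDup_box|constructor|].
    intros [x y]; simpl; split; [|tauto]. intros [_ Hv]. apply andb_prop in Hv. destruct Hv as [Hs Hz].
    apply pzb_true in Hz; auto. cbn [fst snd] in Hz. destruct Hz as [[k1 ->] [k2 ->]].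
    unfold solb in Hs; cbn [fst snd] in Hs. apply Z.eqb_eq in Hs. exfalso; apply E. rewrite <- Hs.
    rewrite feval_eq. exists (a*k1*k1 + b*k1*k2 + c*k2*k2). ring.
Qed.

Lemma stepL n :
  sum_list (map (fun i => if primb a b c p i then theta (gi (a,b,c) p i) n else 0) (idx p)) =
  (p - kronecker_prime (disc (a, b, c)) p) * subst_pow (p ^ 2) (theta (a, b, c)) n
      + theta (a, b, c) n - Pmr p 0 (theta (a, b, c)) n.
Proof.
  pose proof (prime_ge_2 _ Hp). assert (Hp0 : 0 < p) by lia.
  set (B := box_of (a,b,c) n). set (S := solb (a,b,c) (Z.of_nat n)).
  set (chi := kronecker_prime (disc (a,b,c)) p).
  transitivity (sum_list (map (fun i => sum_list (map (fun v =>
     if primb a b c p i then (if andb (S v) (inLb p i v) then 1 else 0) else 0) B)) (idx p))).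
  { apply sum_ext. intros i Hi. apply in_seq in Hi.
    destruct (primb a b c p i).
    - rewrite theta_gi by (auto; lia). rewrite zc_sum. reflexivity.
    - symmetry; apply sum_zero. }
  rewrite sum_swap.
  transitivity (sum_list (map (fun v => if S v then (if pzb v then p - chi else (if Z.of_nat n mod p =? 0 then 0 else 1)) else 0) B)).
  { apply sum_ext. intros v _. apply pointwise. }
  transitivity ((p - chi) * zc (fun v => andb (S v) (pzb v)) B +
                (if Z.of_nat n mod p =? 0 then 0 else 1) * zc (fun v => andb (S v) (negb (pzb v))) B).
  { rewrite !zc_sum, <- !sum_scal, <- sum_add. apply sum_ext. intros v _.
    destruct (S v), (pzb v); cbn [andb negb]; ring. }
  assert (Htot : theta (a,b,c) n = zc (fun v => andb (S v) (pzb v)) B + zc (fun v => andb (S v) (negb (pzb v))) B).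
  { rewrite theta_zc. fold B S. rewrite !zc_sum, <- sum_add. apply sum_ext. intros v _.
    destruct (S v), (pzb v); reflexivity. }
  unfold B, S. rewrite sum_pz. fold B S.
  unfold subst_pow, Pmr.
  pose proof (sum_pz n) as SP. fold B S in SP. rewrite SP in Htot.
  destruct (Z.of_nat n mod p =? 0) eqn:En.
  - ring.
  - assert (E2 : (Z.of_nat n mod p^2 =? 0) = false).
    { apply divb_false; [lia|]. intros Hd. apply divb_false in En; auto. apply En.
      eapply Z.divide_trans; [|exact Hd]. exists p. ring. }
    rewrite E2 in *. lia.
Qed.

End StepL.

Definition mdet (m : mat) : Z := let '(m11,m12,m21,m22) := m in m11 * m22 - m12 * m21.
Definition mneg (m : mat) : mat := let '(m11,m12,m21,m22) := m in (-m11,-m12,-m21,-m22).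

Lemma mat_eq4 (x1 x2 x3 x4 y1 y2 y3 y4 : Z) : x1 = y1 -> x2 = y2 -> x3 = y3 -> x4 = y4 -> (x1,x2,x3,x4) = (y1,y2,y3,y4).
Proof. intros; subst; reflexivity. Qed.

Section Aut.
Variables (a b c : Z).
Hypothesis Hf : pos_def (a,b,c).
Hypothesis Hpr : primitive (a,b,c).
Let D := b*b - 4*a*c.

Definition autom (s : mat) := mdet s = 1 /\ forall v, fv (a,b,c) (mapp s v) = fv (a,b,c) v.
Definition sig (t : Z*Z) : mat := (fst t, - c * snd t, a * snd t, fst t + b * snd t).
Definition autp : list (Z*Z) :=
  if D =? -3 then [(1,0); ((1-b)/2, 1); ((-1-b)/2, 1)]
  else if D =? -4 then [(1,0); (-(b/2), 1)] else [(1,0)].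

Lemma D_neg : D <= -3.
Proof.
  destruct Hf as [_ Hd]. rewrite disc_eq in Hd. unfold D.
  destruct (Z.Even_or_Odd b) as [[k ->]|[k ->]]; nia.
Qed.

Lemma fv_sig t v : fv (a,b,c) (mapp (sig t) v) =
  (fst t * fst t + fst t * b * snd t + a * c * snd t * snd t) * fv (a,b,c) v.
Proof. destruct t, v; unfold fv, mapp, sig, feval; cbn [fa fb fc fst snd]. ring. Qed.

Lemma mdet_sig t : mdet (sig t) = fst t * fst t + fst t * b * snd t + a * c * snd t * snd t.
Proof. destruct t; unfold mdet, sig; cbn [fst snd]. ring. Qed.

Lemma autp_norm t : In t autp -> fst t * fst t + fst t * b * snd t + a * c * snd t * snd t = 1.
Proof.
  unfold autp. destruct (D =? -3) eqn:E3; [|destruct (D =? -4) eqn:E4].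
  - apply Z.eqb_eq in E3. unfold D in E3.
    destruct (Z.Even_or_Odd b) as [[k Hk]|[k Hk]]; [subst; exfalso; nia|].
    subst b. intros [<-|[<-|[<-|[]]]]; cbn [fst snd]; try ring.
    + replace (1 - (2*k+1)) with ((-k)*2) by ring. rewrite Z.div_mul by lia. nia.
    + replace (-1 - (2*k+1)) with ((-k-1)*2) by ring. rewrite Z.div_mul by lia. nia.
  - apply Z.eqb_eq in E4. unfold D in E4.
    destruct (Z.Even_or_Odd b) as [[k Hk]|[k Hk]]; [|subst; exfalso; nia].
    subst b. intros [<-|[<-|[]]]; cbn [fst snd]; try ring.
    replace (2*k/2) with k by (rewrite Z.mul_comm, Z.div_mul; lia). nia.
  - intros [<-|[]]; cbn [fst snd]; ring.
Qed.

Lemma autp_autom t : In t autp -> autom (sig t).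
Proof.
  intros H. split.
  - rewrite mdet_sig. apply autp_norm; auto.
  - intros v. rewrite fv_sig, autp_norm; auto. ring.
Qed.

Lemma autp_len : length autp = Z.to_nat (wD D).
Proof.
  unfold autp, wD. pose proof D_neg.
  destruct (D =? -3); [reflexivity|]. destruct (D =? -4); reflexivity.
Qed.

Lemma autp_cross t t' : In t autp -> In t' autp -> t <> t' ->
  fst t * snd t' - fst t' * snd t = 1 \/ fst t * snd t' - fst t' * snd t = -1.
Proof.
  unfold autp. destruct (D =? -3) eqn:E3; [|destruct (D =? -4) eqn:E4].
  - apply Z.eqb_eq in E3. unfold D in E3.
    destruct (Z.Even_or_Odd b) as [[k Hk]|[k Hk]]; [subst; exfalso; nia|].
    subst b.
    replace (1 - (2*k+1)) with ((-k)*2) by ring. replace (-1 - (2*k+1)) with ((-k-1)*2) by ring.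
    rewrite !Z.div_mul by lia.
    intros [<-|[<-|[<-|[]]]] [<-|[<-|[<-|[]]]] Hne; cbn [fst snd]; try (exfalso; apply Hne; reflexivity); lia.
  - intros [<-|[<-|[]]] [<-|[<-|[]]] Hne; cbn [fst snd]; try (exfalso; apply Hne; reflexivity); lia.
  - intros [<-|[]] [<-|[]] Hne; exfalso; apply Hne; reflexivity.
Qed.

Lemma autp_nodup : NoDup autp.
Proof.
  unfold autp. destruct (D =? -3) eqn:E3; [|destruct (D =? -4) eqn:E4].
  - apply Z.eqb_eq in E3. unfold D in E3.
    destruct (Z.Even_or_Odd b) as [[k Hk]|[k Hk]]; [subst; exfalso; nia|].
    subst b.
    replace (1 - (2*k+1)) with ((-k)*2) by ring. replace (-1 - (2*k+1)) with ((-k-1)*2) by ring.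
    rewrite !Z.div_mul by lia.
    repeat constructor; simpl; intros H; repeat (destruct H as [H|H]; [inversion H; lia|]); auto.
  - repeat constructor; simpl; intros H; repeat (destruct H as [H|H]; [inversion H; lia|]); auto.
  - repeat constructor; simpl; auto.
Qed.

Lemma abs_div_gcd x : (a | x * a) -> (a | x * b) -> (a | x * c) -> (a | x).
Proof.
  assert (K : forall y, 0 <= y -> (a|y*a) -> (a|y*b) -> (a|y*c) -> (a|y)).
  { intros y Hy h1 h2 h3.
    assert (G : (a | Z.gcd (Z.gcd (y*a) (y*b)) (y*c))) by (repeat apply Z.gcd_greatest; auto).
    rewrite Z.gcd_mul_mono_l, (Z.abs_eq y Hy), Z.gcd_mul_mono_l, (Z.abs_eq y Hy) in G.
    unfold primitive in Hpr; cbn [fa fb fc fst snd] in Hpr. rewrite Hpr, Z.mul_1_r in G. auto. }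
  intros h1 h2 h3. apply Z.divide_abs_r.
  destruct (Z_le_gt_dec 0 x) as [Hx|Hx].
  - rewrite Z.abs_eq by lia. auto.
  - rewrite Z.abs_neq by lia. apply K; try lia;
    [replace (-x*a) with (-(x*a)) by ring|replace (-x*b) with (-(x*b)) by ring|replace (-x*c) with (-(x*c)) by ring];
    apply Z.divide_opp_r; auto.
Qed.

Lemma classify s : autom s -> exists t, In t autp /\ (s = sig t \/ s = mneg (sig t)).
Proof.
  destruct s as [[[al be] ga] de]. intros [Hd H].
  unfold mdet in Hd.
  pose proof (H (1,0)) as e1. pose proof (H (0,1)) as e2. pose proof (H (1,1)) as e3.
  unfold fv, mapp, feval in e1, e2, e3; cbn [fa fb fc fst snd] in e1, e2, e3.
  assert (q1 : a*al*al + b*al*ga + c*ga*ga = a) by (ring_simplify in e1; ring_simplify; lia).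
  assert (q2 : a*be*be + b*be*de + c*de*de = c) by (ring_simplify in e2; ring_simplify; lia).
  assert (q3 : 2*a*al*be + b*(al*de+be*ga) + 2*c*ga*de = b).
  { ring_simplify in e3; ring_simplify in e1; ring_simplify in e2. ring_simplify. lia. }
  assert (I1 : (b*al + 2*c*ga)*(al*de - be*ga) = -2*be*(a*al*al + b*al*ga + c*ga*ga) + al*(2*a*al*be + b*(al*de+be*ga) + 2*c*ga*de)) by ring.
  assert (I2 : (2*a*al + b*ga)*(al*de - be*ga) = 2*de*(a*al*al + b*al*ga + c*ga*ga) - ga*(2*a*al*be + b*(al*de+be*ga) + 2*c*ga*de)) by ring.
  rewrite Hd, q1, q3 in I1, I2.
  assert (Hcg : c*ga = -(a*be)) by lia.
  assert (Hag : a*(al - de) = -(b*ga)) by lia.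
  destruct Hf as [Ha _]. cbn [fa fst] in Ha.
  assert (Hdiv : (a | ga)).
  { apply abs_div_gcd.
    - exists ga; ring.
    - exists (de - al). rewrite Z.mul_comm. lia.
    - exists (-be). rewrite Z.mul_comm, Hcg. ring. }
  destruct Hdiv as [u Hu]. subst ga.
  assert (Hbe : be = -c*u) by (apply (Z.mul_cancel_l _ _ a); lia).
  assert (Hde : de = al + b*u) by (apply (Z.mul_cancel_l _ _ a); lia).
  subst be de.
  clear e1 e2 e3 H q1 q2 q3 I1 I2 Hcg Hag.
  assert (Hn : 4 = (2*al + b*u)*(2*al+b*u) - D*(u*u)).
  { unfold D. transitivity (4*(al * (al + b * u) - - c * u * (u * a))); [rewrite Hd; ring|ring]. }
  pose proof D_neg as HD.
  assert (Hsq : 0 <= (2*al + b*u)*(2*al+b*u)) by apply Z.square_nonneg.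
  assert (H3 : 3*(u*u) <= -D*(u*u)) by (apply Z.mul_le_mono_nonneg_r; [apply Z.square_nonneg|lia]).
  assert (Hu2 : u*u <= 1) by lia.
  assert (Hu : u = 0 \/ u = 1 \/ u = -1) by nia.
  destruct Hu as [-> | [-> | ->]].
  - assert (al = 1 \/ al = -1) as [->| ->] by (ring_simplify in Hd; nia); exists (1,0);
    (split; [unfold autp; destruct (D =? -3); [|destruct (D =? -4)]; simpl; auto|]).
    + left. unfold sig; cbn [fst snd]. apply mat_eq4; ring.
    + right. unfold sig, mneg; cbn [fst snd]. apply mat_eq4; ring.
  - assert (Hn' : 4 = (2*al+b)*(2*al+b) - D) by (rewrite Hn; ring).
    assert (0 <= (2*al+b)*(2*al+b)) by apply Z.square_nonneg.
    assert (HD4 : D = -3 \/ D = -4) by lia.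
    assert (Eq : (2*al+b)*(2*al+b) = 4 + D) by lia.
    unfold autp. destruct HD4 as [E|E]; rewrite E in Eq; rewrite E; cbn [Z.eqb Pos.eqb].
    + assert (2*al + b = 1 \/ 2*al + b = -1) as [E'|E'] by nia.
      * exists ((1-b)/2, 1). split; [simpl; auto|left].
        replace (1-b) with (al*2) by lia. rewrite Z.div_mul by lia. unfold sig; cbn [fst snd]. apply mat_eq4; ring.
      * exists ((-1-b)/2, 1). split; [simpl; auto|left].
        replace (-1-b) with (al*2) by lia. rewrite Z.div_mul by lia. unfold sig; cbn [fst snd]. apply mat_eq4; ring.
    + assert (E' : 2*al + b = 0) by nia.
      exists (-(b/2), 1). split; [simpl; auto|left].
      assert (Eb2 : b/2 = -al) by (replace b with ((-al)*2) by lia; apply Z.div_mul; lia). rewrite Eb2. unfold sig; cbn [fst snd]. apply mat_eq4; lia.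
  - assert (Hn' : 4 = (2*(-al)+b)*(2*(-al)+b) - D) by (rewrite Hn; ring).
    assert (0 <= (2*(-al)+b)*(2*(-al)+b)) by apply Z.square_nonneg.
    assert (HD4 : D = -3 \/ D = -4) by lia.
    assert (Eq : (2*(-al)+b)*(2*(-al)+b) = 4 + D) by lia.
    unfold autp. destruct HD4 as [E|E]; rewrite E in Eq; rewrite E; cbn [Z.eqb Pos.eqb].
    + assert (2*(-al) + b = 1 \/ 2*(-al) + b = -1) as [E'|E'] by nia.
      * exists ((1-b)/2, 1). split; [simpl; auto|right].
        replace (1-b) with ((-al)*2) by lia. rewrite Z.div_mul by lia. unfold sig, mneg; cbn [fst snd]. apply mat_eq4; ring.
      * exists ((-1-b)/2, 1). split; [simpl; auto|right].
        replace (-1-b) with ((-al)*2) by lia. rewrite Z.div_mul by lia. unfold sig, mneg; cbn [fst snd]. apply mat_eq4; ring.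
    + assert (E' : 2*(-al) + b = 0) by nia.
      exists (-(b/2), 1). split; [simpl; auto|right].
      assert (Eb2 : b/2 = al) by (replace b with (al*2) by lia; apply Z.div_mul; lia). rewrite Eb2. unfold sig, mneg; cbn [fst snd]. apply mat_eq4; lia.
Qed.

End Aut.

Definition mmul (A B : mat) : mat :=
  let '(a1,a2,a3,a4) := A in let '(b1,b2,b3,b4) := B in
  (a1*b1 + a2*b3, a1*b2 + a2*b4, a3*b1 + a4*b3, a3*b2 + a4*b4).
Definition madj (A : mat) : mat := let '(a1,a2,a3,a4) := A in (a4, -a2, -a3, a1).

Lemma mapp_mul A B v : mapp (mmul A B) v = mapp A (mapp B v).
Proof. destruct A as [[[a1 a2] a3] a4], B as [[[b1 b2] b3] b4], v as [x y]; unfold mapp, mmul; cbn [fst snd]; f_equal; ring. Qed.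

Lemma mdet_mul A B : mdet (mmul A B) = mdet A * mdet B.
Proof. destruct A as [[[a1 a2] a3] a4], B as [[[b1 b2] b3] b4]; unfold mdet, mmul; ring. Qed.

Lemma mapp_adj A v : mapp A (mapp (madj A) v) = (mdet A * fst v, mdet A * snd v).
Proof. destruct A as [[[a1 a2] a3] a4], v as [x y]; unfold mapp, madj, mdet; cbn [fst snd]; f_equal; ring. Qed.

Lemma mapp_adj' A v : mapp (madj A) (mapp A v) = (mdet A * fst v, mdet A * snd v).
Proof. destruct A as [[[a1 a2] a3] a4], v as [x y]; unfold mapp, madj, mdet; cbn [fst snd]; f_equal; ring. Qed.

Lemma mapp_lin A l q z w : mapp A (l * fst w + q * fst z, l * snd w + q * snd z) =
  (l * fst (mapp A w) + q * fst (mapp A z), l * snd (mapp A w) + q * snd (mapp A z)).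
Proof. destruct A as [[[a1 a2] a3] a4], w as [x y], z as [s t]; unfold mapp; cbn [fst snd]; f_equal; ring. Qed.

Lemma fv_scale2 f q x y : fv f (q * x, q * y) = q * q * fv f (x, y).
Proof. unfold fv, feval; cbn [fst snd]. ring. Qed.

Lemma fv_abc A B C x y : fv (A,B,C) (x,y) = A*x*x + B*x*y + C*y*y.
Proof. unfold fv, feval; cbn [fa fb fc fst snd]; ring. Qed.

Section U.
Variables (a b c p : Z).
Hypothesis Hf : pos_def (a,b,c).
Hypothesis Hpr : primitive (a,b,c).
Hypothesis Hp : prime p.
Let f : form := (a,b,c).

Lemma radical (A B C : Z) (N : mat) z z' :
  (forall v, fv (A,B,C) v = fv f (mapp N v)) -> mapp N z = (p * fst z', p * snd z') ->
  (p | 2*A*fst z + B*snd z) /\ (p | B*fst z + 2*C*snd z).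
Proof.
  intros H Hz. pose proof (prime_ge_2 _ Hp).
  destruct N as [[[n1 n2] n3] n4], z as [z1 z2], z' as [w1 w2]. unfold mapp in Hz; cbn [fst snd] in *.
  injection Hz as Hz1 Hz2.
  pose proof (H (z1, z2)) as E0. pose proof (H (p + z1, z2)) as E1. pose proof (H (z1, p + z2)) as E2.
  unfold mapp in E0, E1, E2; cbn [fst snd] in E0, E1, E2.
  rewrite Hz1, Hz2 in E0.
  replace (n1 * (p + z1) + n2 * z2) with (p * (n1 + w1)) in E1 by lia.
  replace (n3 * (p + z1) + n4 * z2) with (p * (n3 + w2)) in E1 by lia.
  replace (n1 * z1 + n2 * (p + z2)) with (p * (n2 + w1)) in E2 by lia.
  replace (n3 * z1 + n4 * (p + z2)) with (p * (n4 + w2)) in E2 by lia.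
  rewrite fv_scale2 in E0, E1, E2.
  unfold fv, feval in E0, E1, E2; unfold f in E0, E1, E2; cbn [fa fb fc fst snd] in E0, E1, E2.
  set (F0 := a * w1 ^ 2 + b * w1 * w2 + c * w2 ^ 2) in *.
  set (F1 := a * (n1 + w1) ^ 2 + b * (n1 + w1) * (n3 + w2) + c * (n3 + w2) ^ 2) in *.
  set (F2 := a * (n2 + w1) ^ 2 + b * (n2 + w1) * (n4 + w2) + c * (n4 + w2) ^ 2) in *.
  assert (Hp0 : p <> 0) by lia.
  split.
  - assert (K : p*(2*A*z1+B*z2) = p*((F1-F0-A)*p)).
    { transitivity ((A*(p+z1)^2 + B*(p+z1)*z2 + C*z2^2) - (A*z1^2 + B*z1*z2 + C*z2^2) - A*p*p); [ring|].
      rewrite E1, E0. ring. }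
    apply Z.mul_cancel_l in K; auto. exists (F1 - F0 - A). auto.
  - assert (K : p*(B*z1+2*C*z2) = p*((F2-F0-C)*p)).
    { transitivity ((A*z1^2 + B*z1*(p+z2) + C*(p+z2)^2) - (A*z1^2 + B*z1*z2 + C*z2^2) - C*p*p); [ring|].
      rewrite E2, E0. ring. }
    apply Z.mul_cancel_l in K; auto. exists (F2 - F0 - C). auto.
Qed.

Lemma div_of_mul_d X d : (p | X * d) -> ~ (p | d) -> (p | X).
Proof. intros H Hd. apply prime_mult in H; auto. tauto. Qed.

Lemma not_div_2 : p <> 2 -> ~ (p | 2).
Proof. intros H2 H. apply prime_divisors in H; [|apply prime_2]. pose proof (prime_ge_2 _ Hp). lia. Qed.

Lemma Uprime (A B C : Z) (N M : mat) z z' y y' :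
  (forall v, fv (A,B,C) v = fv f (mapp N v)) -> (forall v, fv (A,B,C) v = fv f (mapp M v)) ->
  mapp N z = (p * fst z', p * snd z') -> mapp M y = (p * fst y', p * snd y') ->
  ~ (p | fst z * snd y - snd z * fst y) -> ~ primitive (A,B,C).
Proof.
  intros HN HM Hz Hy Hd Hprim. pose proof (prime_ge_2 _ Hp).
  destruct (radical A B C N z z' HN Hz) as [h1 h2].
  destruct (radical A B C M y y' HM Hy) as [h3 h4].
  destruct z as [z1 z2], y as [y1 y2]; cbn [fst snd] in *.
  set (d := z1 * y2 - z2 * y1) in *.
  assert (hA : (p | 2*A*d)).
  { replace (2*A*d) with (y2*(2*A*z1 + B*z2) - z2*(2*A*y1 + B*y2)) by (unfold d; ring).
    apply Z.divide_sub_r; apply Z.divide_mul_r; auto. }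
  assert (hB : (p | B*d)).
  { replace (B*d) with (z1*(2*A*y1 + B*y2) - y1*(2*A*z1 + B*z2)) by (unfold d; ring).
    apply Z.divide_sub_r; apply Z.divide_mul_r; auto. }
  assert (hC : (p | 2*C*d)).
  { replace (2*C*d) with (z1*(B*y1 + 2*C*y2) - y1*(B*z1 + 2*C*z2)) by (unfold d; ring).
    apply Z.divide_sub_r; apply Z.divide_mul_r; auto. }
  apply div_of_mul_d in hA, hB, hC; auto.
  assert (HA : (p | A) /\ (p | C)).
  { destruct (Z.eq_dec p 2) as [E2|E2].
    - subst p.
      assert (gz : (2 | A*z1*z1 + C*z2*z2)).
      { pose proof (HN (z1,z2)) as E. rewrite Hz, fv_scale2, fv_abc in E.
        destruct hB as [kb Hkb].
        exists (2 * fv f z' - kb*z1*z2). subst B. rewrite <- surjective_pairing in E. lia. }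
      assert (gy : (2 | A*y1*y1 + C*y2*y2)).
      { pose proof (HM (y1,y2)) as E. rewrite Hy, fv_scale2, fv_abc in E.
        destruct hB as [kb Hkb].
        exists (2 * fv f y' - kb*y1*y2). subst B. rewrite <- surjective_pairing in E. lia. }
      assert (Hd2 : ~ (2 | d + 2*z2*y1)).
      { intros [k Hk]. apply Hd. exists (k - z2*y1). lia. }
      split.
      + assert (X : (2 | A * (d * (d + 2*z2*y1)))).
        { replace (A * (d * (d + 2*z2*y1))) with (y2*y2*(A*z1*z1 + C*z2*z2) - z2*z2*(A*y1*y1 + C*y2*y2)) by (unfold d; ring).
          apply Z.divide_sub_r; apply Z.divide_mul_r; auto. }
        apply prime_mult in X; [|apply prime_2]. destruct X as [X|X]; auto.
        apply prime_mult in X; [|apply prime_2]. tauto.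
      + assert (X : (2 | C * (d * (d + 2*z2*y1)))).
        { replace (C * (d * (d + 2*z2*y1))) with (-(y1*y1*(A*z1*z1 + C*z2*z2) - z1*z1*(A*y1*y1 + C*y2*y2))) by (unfold d; ring).
          apply Z.divide_opp_r. apply Z.divide_sub_r; apply Z.divide_mul_r; auto. }
        apply prime_mult in X; [|apply prime_2]. destruct X as [X|X]; auto.
        apply prime_mult in X; [|apply prime_2]. tauto.
    - split; [apply (div_of_mul_d A 2)|apply (div_of_mul_d C 2)]; try apply not_div_2; auto;
        rewrite Z.mul_comm; auto. }
  destruct HA as [hA' hC'].
  assert (X : (p | 1)) by (apply (prim_divs _ p Hprim); auto).
  apply Z.divide_1_r_nonneg in X; lia.
Qed.

End U.

Definition mscal (q : Z) (A : mat) : mat := let '(a1,a2,a3,a4) := A in (q*a1, q*a2, q*a3, q*a4).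

Lemma mapp_scal q A v : mapp (mscal q A) v = (q * fst (mapp A v), q * snd (mapp A v)).
Proof. destruct A as [[[a1 a2] a3] a4], v as [x y]; unfold mapp, mscal; cbn [fst snd]; f_equal; ring. Qed.

Lemma mapp_pv q A x y : mapp A (q*x, q*y) = (q * fst (mapp A (x,y)), q * snd (mapp A (x,y))).
Proof. destruct A as [[[a1 a2] a3] a4]; unfold mapp; cbn [fst snd]; f_equal; ring. Qed.

Lemma mdet_scal q A : mdet (mscal q A) = q*q*mdet A.
Proof. destruct A as [[[a1 a2] a3] a4]; unfold mdet, mscal; ring. Qed.

Lemma mdet_adj A : mdet (madj A) = mdet A.
Proof. destruct A as [[[a1 a2] a3] a4]; unfold mdet, madj; ring. Qed.

Lemma mapp_neg A v : mapp (mneg A) v = (-1 * fst (mapp A v) + 0 * 0, -1 * snd (mapp A v) + 0 * 0).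
Proof. destruct A as [[[a1 a2] a3] a4], v as [x y]; unfold mapp, mneg; cbn [fst snd]; f_equal; ring. Qed.

Lemma mat_ext A B : (forall v, mapp A v = mapp B v) -> A = B.
Proof.
  destruct A as [[[a1 a2] a3] a4], B as [[[b1 b2] b3] b4]. intros H.
  pose proof (H (1,0)) as E1. pose proof (H (0,1)) as E2. unfold mapp in E1, E2; cbn [fst snd] in E1, E2.
  injection E1 as E1 E1'. injection E2 as E2 E2'. apply mat_eq4; lia.
Qed.

Lemma pair_cancel q x y x' y' : q <> 0 -> (q*x, q*y) = (q*x', q*y') -> (x, y) = (x', y').
Proof. intros Hq E. injection E as E1 E2. apply Z.mul_cancel_l in E1, E2; auto. subst; auto. Qed.

Lemma mapp_lin2 A x y : mapp A (x,y) = (x * fst (mapp A (1,0)) + y * fst (mapp A (0,1)), x * snd (mapp A (1,0)) + y * snd (mapp A (0,1))).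
Proof. destruct A as [[[a1 a2] a3] a4]; unfold mapp; cbn [fst snd]; f_equal; ring. Qed.

Lemma mdet_M p i : mdet (Mmat p i) = p.
Proof. destruct i; unfold mdet, Mmat; ring. Qed.

Section D.
Variables (a b c p : Z).
Hypothesis Hf : pos_def (a,b,c).
Hypothesis Hpr : primitive (a,b,c).
Hypothesis Hp : prime p.
Let f : form := (a,b,c).

Lemma U (N M : mat) (g : form) : mdet N = p -> mdet M = p ->
  (forall v, fv g v = fv f (mapp N v)) -> (forall v, fv g v = fv f (mapp M v)) -> primitive g ->
  exists S, mmul N (madj M) = mscal p S.
Proof.
  intros dN dM HN HM Hg. pose proof (prime_ge_2 _ Hp).
  destruct g as [[A B] C].
  destruct N as [[[n1 n2] n3] n4], M as [[[m1 m2] m3] m4]. unfold mdet in dN, dM.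
  set (zA := (n4, -n3)). set (zB := (-n2, n1)). set (yA := (m4, -m3)). set (yB := (-m2, m1)).
  assert (NzA : mapp (n1,n2,n3,n4) zA = (p * fst (1,0), p * snd (1,0))) by (unfold zA, mapp; cbn [fst snd]; f_equal; lia).
  assert (NzB : mapp (n1,n2,n3,n4) zB = (p * fst (0,1), p * snd (0,1))) by (unfold zB, mapp; cbn [fst snd]; f_equal; lia).
  assert (MyA : mapp (m1,m2,m3,m4) yA = (p * fst (1,0), p * snd (1,0))) by (unfold yA, mapp; cbn [fst snd]; f_equal; lia).
  assert (MyB : mapp (m1,m2,m3,m4) yB = (p * fst (0,1), p * snd (0,1))) by (unfold yB, mapp; cbn [fst snd]; f_equal; lia).
  assert (T : forall z y z' y' e, mapp (n1,n2,n3,n4) z = (p * fst z', p * snd z') ->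
              mapp (m1,m2,m3,m4) y = (p * fst y', p * snd y') ->
              (fst z * snd y - snd z * fst y = e \/ fst z * snd y - snd z * fst y = - e) -> (p | e)).
  { intros z y z' y' e Hz Hy He. destruct (Zdivide_dec p e) as [D|D]; auto. exfalso.
    apply (Uprime a b c p Hp A B C _ _ z z' y y' HN HM Hz Hy); auto.
    intros X; apply D. destruct He as [He|He]; rewrite He in X; auto. apply Z.divide_opp_r in X. rewrite Z.opp_involutive in X. auto. }
  assert (e1 : (p | n1*m4 + n2*(-m3))) by (apply (T zB yA _ _ _ NzB MyA); unfold zB, yA; cbn [fst snd]; right; ring).
  assert (e2 : (p | n1*(-m2) + n2*m1)) by (apply (T zB yB _ _ _ NzB MyB); unfold zB, yB; cbn [fst snd]; right; ring).
  assert (e3 : (p | n3*m4 + n4*(-m3))) by (apply (T zA yA _ _ _ NzA MyA); unfold zA, yA; cbn [fst snd]; left; ring).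
  assert (e4 : (p | n3*(-m2) + n4*m1)) by (apply (T zA yB _ _ _ NzA MyB); unfold zA, yB; cbn [fst snd]; left; ring).
  destruct e1 as [s1 E1], e2 as [s2 E2], e3 as [s3 E3], e4 as [s4 E4].
  exists (s1, s2, s3, s4). unfold mmul, madj, mscal. rewrite E1, E2, E3, E4. apply mat_eq4; ring.
Qed.

Lemma inLb_neg i w : 0 < p -> inLb p i (-1 * fst w + 0 * 0, -1 * snd w + 0 * 0) = true -> inLb p i w = true.
Proof.
  intros Hp0 H. pose proof (inLb_comb p i (-1) (0,0) _ Hp0 H) as X. cbn [fst snd] in X.
  replace (-1 * (-1 * fst w + 0 * 0) + p * 0) with (fst w) in X by ring.
  replace (-1 * (-1 * snd w + 0 * 0) + p * 0) with (snd w) in X by ring.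
  rewrite <- surjective_pairing in X. auto.
Qed.

Lemma D1 i k : (i <= Z.to_nat p)%nat -> (k <= Z.to_nat p)%nat -> primitive (gi f p k) ->
  sl2_equiv (gi f p i) (gi f p k) ->
  exists t, In t (autp a b c) /\ inLb p i (mapp (sig a b c t) (vi k)) = true.
Proof.
  intros Hi Hk Hprk [al [be [ga [de [Hd H]]]]].
  pose proof (prime_ge_2 _ Hp) as Hp2. assert (Hp0 : 0 < p) by lia. assert (Hpn : p <> 0) by lia.
  set (G := (al, be, ga, de) : mat). set (N := mmul (Mmat p i) G). set (M := Mmat p k).
  assert (HN : forall v, fv (gi f p k) v = fv f (mapp N v)).
  { intros [x y]. unfold fv at 1. cbn [fst snd]. rewrite H. unfold N. rewrite mapp_mul.
    rewrite gi_feval by auto. reflexivity. }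
  assert (HM : forall v, fv (gi f p k) v = fv f (mapp M v)).
  { intros [x y]. unfold fv at 1. cbn [fst snd]. rewrite gi_feval by auto. reflexivity. }
  assert (dN : mdet N = p) by (unfold N; rewrite mdet_mul, mdet_M; unfold G, mdet; rewrite Hd; ring).
  assert (dM : mdet M = p) by apply mdet_M.
  destruct (U N M (gi f p k) dN dM HN HM Hprk) as [S HS].
  assert (SM : forall v, mapp S (mapp M v) = mapp N v).
  { intros [x y]. rewrite (surjective_pairing (mapp S _)), (surjective_pairing (mapp N (x,y))).
    apply (pair_cancel p); auto. rewrite <- mapp_scal, <- HS, mapp_mul, mapp_adj', dM.
    cbn [fst snd]. apply mapp_pv. }
  assert (dS : mdet S = 1).
  { assert (E : mdet (mscal p S) = mdet (mmul N (madj M))) by (rewrite HS; auto).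
    rewrite mdet_scal, mdet_mul, mdet_adj, dN, dM in E.
    apply (Z.mul_cancel_l _ _ (p*p)); [nia|]. lia. }
  assert (aS : autom a b c S).
  { split; auto. intros [x y].
    apply (Z.mul_cancel_l _ _ (p*p)); [nia|].
    rewrite (surjective_pairing (mapp S (x,y))).
    rewrite <- !fv_scale2.
    replace (p * fst (mapp S (x,y)), p * snd (mapp S (x,y))) with (mapp S (p*x, p*y)) by (apply mapp_pv).
    replace (p*x, p*y) with (mapp M (mapp (madj M) (x,y))) by (rewrite mapp_adj, dM; reflexivity).
    rewrite SM, <- HN, <- HM. reflexivity. }
  destruct (classify a b c Hf Hpr S aS) as [t [Ht HSt]].
  exists t. split; auto.
  assert (L : inLb p i (mapp S (vi k)) = true).
  { rewrite (vi_M p k). fold M. rewrite SM. unfold N. rewrite mapp_mul. apply inLb_M; eauto. }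
  destruct HSt as [-> | ->]; auto.
  rewrite mapp_neg in L. apply inLb_neg; auto.
Qed.

Lemma D2 i k t : (i <= Z.to_nat p)%nat -> (k <= Z.to_nat p)%nat -> In t (autp a b c) ->
  inLb p i (mapp (sig a b c t) (vi k)) = true -> sl2_equiv (gi f p i) (gi f p k).
Proof.
  intros Hi Hk Ht Hl.
  pose proof (prime_ge_2 _ Hp) as Hp2. assert (Hp0 : 0 < p) by lia. assert (Hpn : p <> 0) by lia.
  set (s := sig a b c t). destruct (autp_autom a b c Hf Hpr t Ht) as [ds As]. fold s in ds, As.
  set (Mi := Mmat p i). set (Mk := Mmat p k).
  assert (Col : forall e, exists u, mapp s (mapp Mk e) = mapp Mi u).
  { intros e. apply inLb_M; auto.
    assert (Le : inLb p k (mapp Mk e) = true) by (apply inLb_M; eauto).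
    destruct (inLb_decomp p k _ Hp0 Le) as [l [z Ez]]. rewrite Ez.
    rewrite (surjective_pairing (vi k)) in Hl.
    rewrite mapp_lin. apply inLb_comb; auto. }
  destruct (Col (1,0)) as [c1 H1]. destruct (Col (0,1)) as [c2 H2].
  set (G := (fst c1, fst c2, snd c1, snd c2) : mat).
  assert (EG : forall v, mapp (mmul Mi G) v = mapp (mmul s Mk) v).
  { intros [x y]. rewrite (mapp_lin2 (mmul s Mk) x y), !mapp_mul, H1, H2.
    unfold G. destruct c1 as [u1 u2], c2 as [w1 w2]; cbn [fst snd].
    destruct Mi as [[[a1 a2] a3] a4]. unfold mapp; cbn [fst snd]. f_equal; ring. }
  apply mat_ext in EG.
  assert (dG : mdet G = 1).
  { assert (E : mdet (mmul Mi G) = mdet (mmul s Mk)) by (rewrite EG; auto).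
    rewrite !mdet_mul in E. unfold Mi, Mk in E. rewrite !mdet_M, ds in E.
    apply (Z.mul_cancel_l _ _ p); auto. lia. }
  exists (fst c1), (fst c2), (snd c1), (snd c2). split; [unfold G, mdet in dG; lia|].
  intros x y.
  rewrite (gi_feval f p i) by auto. rewrite (gi_feval f p k) by auto.
  unfold f. rewrite <- (As (mapp (Mmat p k) (x,y))). fold Mk Mi.
  rewrite <- mapp_mul, <- EG, mapp_mul. f_equal.
Qed.

End D.

Definition decb (P : Prop) : bool := if excluded_middle_informative P then true else false.
Lemma decb_true P : decb P = true <-> P.
Proof. unfold decb. destruct (excluded_middle_informative P); split; auto; congruence. Qed.
Lemma decb_false P : decb P = false <-> ~ P.
Proof. unfold decb. destruct (excluded_middle_informative P); split; auto; try congruence; tauto. Qed.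

Lemma nz_mapp p s w : mdet s = 1 -> nz p w -> nz p (mapp s w).
Proof.
  intros Hd Hw [H1 H2]. apply Hw.
  destruct s as [[[s1 s2] s3] s4], w as [x y]. unfold mdet in Hd; unfold mapp in H1, H2; cbn [fst snd] in *.
  split.
  - replace x with (s4 * (s1 * x + s2 * y) + (-s2) * (s3 * x + s4 * y)) by
      (transitivity (x * (s1*s4 - s2*s3)); [ring|rewrite Hd; ring]).
    apply Z.divide_add_r; apply Z.divide_mul_r; auto.
  - replace y with ((-s3) * (s1 * x + s2 * y) + s1 * (s3 * x + s4 * y)) by
      (transitivity (y * (s1*s4 - s2*s3)); [ring|rewrite Hd; ring]).
    apply Z.divide_add_r; apply Z.divide_mul_r; auto.
Qed.

Lemma det_sig a b c t t' v :
  fst (mapp (sig a b c t) v) * snd (mapp (sig a b c t') v) - snd (mapp (sig a b c t) v) * fst (mapp (sig a b c t') v)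
  = (fst t * snd t' - fst t' * snd t) * fv (a,b,c) v.
Proof. destruct t, t', v; unfold mapp, sig, fv, feval; cbn [fa fb fc fst snd]. ring. Qed.

Section M.
Variables (a b c p : Z).
Hypothesis Hf : pos_def (a,b,c).
Hypothesis Hpr : primitive (a,b,c).
Hypothesis Hp : prime p.
Let f : form := (a,b,c).

Lemma orbit_count k : (k <= Z.to_nat p)%nat -> primitive (gi f p k) ->
  Z.of_nat (length (filter (fun i => decb (sl2_equiv (gi f p i) (gi f p k))) (idx p))) = wD (disc f).
Proof.
  intros Hk Hprk. pose proof (prime_ge_2 _ Hp) as Hp2. assert (Hp0 : 0 < p) by lia.
  assert (NZ : forall t, In t (autp a b c) -> nz p (mapp (sig a b c t) (vi k))).
  { intros t Ht. apply nz_mapp; [apply (autp_autom a b c Hf Hpr t Ht)|apply nz_vi; auto]. }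
  set (l2 := map (fun t => line p (mapp (sig a b c t) (vi k))) (autp a b c)).
  rewrite (count_same _ l2 _ (fun _ => true)).
  - assert (Hl : length (filter (fun _ : nat => true) l2) = length l2).
    { clear. induction l2; simpl; auto. }
    rewrite Hl. unfold l2. rewrite length_map, autp_len by auto.
    unfold f. rewrite disc_eq. unfold wD.
    destruct (b*b - 4*a*c =? -3); [reflexivity|]. destruct (b*b - 4*a*c =? -4); reflexivity.
  - apply seq_NoDup.
  - unfold l2. apply NoDup_map_NoDup_ForallPairs; [|apply autp_nodup; auto].
    intros t t' Ht Ht' E.
    destruct (excluded_middle_informative (t = t')) as [|Hne]; auto. exfalso.
    pose proof (line_le p _ Hp (NZ t Ht)) as Hle.
    assert (L1 : inLb p (line p (mapp (sig a b c t) (vi k))) (mapp (sig a b c t) (vi k)) = true)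
      by (apply line_spec; auto).
    assert (L2 : inLb p (line p (mapp (sig a b c t) (vi k))) (mapp (sig a b c t') (vi k)) = true)
      by (rewrite E; apply line_spec; auto; rewrite <- E; auto).
    pose proof (inLb_det p _ _ _ Hp0 L1 L2) as Hd. rewrite det_sig in Hd.
    apply (gi_prim f p k Hpr Hp Hk) in Hprk. apply Hprk.
    destruct (autp_cross a b c Hf Hpr t t' Ht Ht' Hne) as [X|X]; rewrite X in Hd.
    + rewrite Z.mul_1_l in Hd. exact Hd.
    + apply Z.divide_opp_r. replace (- fv (a,b,c) (vi k)) with (-1 * fv (a,b,c) (vi k)) by ring. exact Hd.
  - intros i. split.
    + intros [Hi Hd]. split; auto. apply (proj1 (decb_true _)) in Hd. apply in_seq in Hi.
      destruct (D1 a b c p Hf Hpr Hp i k ltac:(lia) Hk Hprk Hd) as [t [Ht Hl]].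
      unfold l2. apply in_map_iff. exists t. split; auto. symmetry. apply line_spec; auto. lia.
    + intros [Hi _]. unfold l2 in Hi. apply in_map_iff in Hi. destruct Hi as [t [Ei Ht]].
      pose proof (line_le p _ Hp (NZ t Ht)) as Hle.
      split; [apply in_seq; lia|]. apply (proj2 (decb_true _)).
      apply (D2 a b c p Hf Hpr Hp i k t); auto; [lia|]. apply line_spec; auto; lia.
Qed.

Lemma In_psi G : In G (psi_list f p) -> exists k, (k <= Z.to_nat p)%nat /\ G = gi f p k.
Proof.
  intros H. destruct (In_nth _ _ (0,0,0) H) as [k [Hk E]]. rewrite psi_length in Hk.
  exists k. split; [lia|]. unfold gi. auto.
Qed.

Lemma count_one (R : list form) G :
  (forall i j d, (i < j < length R)%nat -> ~ sl2_equiv (nth i R d) (nth j R d)) ->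
  (exists F, In F R /\ sl2_equiv G F) ->
  sum_list (map (fun F => if decb (sl2_equiv G F) then 1 else 0) R) = 1.
Proof.
  intros HR [F [HF HGF]].
  assert (ND : NoDup R).
  { apply (NoDup_nth R (0,0,0)). intros i j Hi Hj E.
    destruct (Nat.lt_trichotomy i j) as [L|[L|L]]; auto; exfalso.
    - apply (HR i j (0,0,0)); [lia|]. rewrite E. apply sl2_refl.
    - apply (HR j i (0,0,0)); [lia|]. rewrite E. apply sl2_refl. }
  rewrite (sum_single R _ F ND HF).
  - replace (decb (sl2_equiv G F)) with true by (symmetry; apply (proj2 (decb_true _)); auto). reflexivity.
  - intros F' HF' Hd. apply (proj1 (decb_true _)) in Hd.
    destruct (excluded_middle_informative (F' = F)) as [|Hne]; auto. exfalso.
    destruct (@In_nth form R F (0,0,0) HF) as [i [Hi Ei]]. destruct (@In_nth form R F' (0,0,0) HF') as [j [Hj Ej]].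
    assert (FF : sl2_equiv F F') by (apply (sl2_trans _ G); [apply sl2_sym|]; auto).
    destruct (Nat.lt_trichotomy i j) as [L|[L|L]].
    + apply (HR i j (0,0,0)); [split; auto|]. rewrite Ei, Ej. auto.
    + subst j. apply Hne. congruence.
    + apply (HR j i (0,0,0)); [split; auto|]. rewrite Ei, Ej. apply sl2_sym; auto.
Qed.

Lemma stepM (R : list form) n : reps_of_classes R (psi_list f p) ->
  wD (disc f) * sum_list (map (fun F => theta F n) R) =
  sum_list (map (fun i => if primb a b c p i then theta (gi f p i) n else 0) (idx p)).
Proof.
  intros [H1 [H2 H3]].
  pose proof (prime_ge_2 _ Hp) as Hp2.
  rewrite <- sum_scal.
  transitivity (sum_list (map (fun F => sum_list (map (fun i =>
     if decb (sl2_equiv (gi f p i) F) then theta (gi f p i) n else 0) (idx p))) R)).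
  { apply sum_ext. intros F HF. destruct (H1 F HF) as [HprF [G [HG HGF]]].
    destruct (In_psi G HG) as [k [Hk ->]].
    assert (Hprk : primitive (gi f p k)) by (eapply sl2_prim; eauto).
    rewrite <- (orbit_count k Hk Hprk). rewrite count_sum, Z.mul_comm, <- sum_scal.
    apply sum_ext. intros i Hi. apply in_seq in Hi.
    assert (Eq : decb (sl2_equiv (gi f p i) F) = decb (sl2_equiv (gi f p i) (gi f p k))).
    { destruct (decb (sl2_equiv (gi f p i) (gi f p k))) eqn:E.
      - apply (proj1 (decb_true _)) in E. apply (proj2 (decb_true _)). eapply sl2_trans; eauto.
      - apply (proj1 (decb_false _)) in E. apply (proj2 (decb_false _)). intros X. apply E.
        eapply sl2_trans; eauto. apply sl2_sym; auto. }
    rewrite Eq. destruct (decb (sl2_equiv (gi f p i) (gi f p k))) eqn:E; [|ring].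
    apply (proj1 (decb_true _)) in E.
    rewrite Z.mul_1_r. apply sl2_theta; [apply sl2_sym; apply (sl2_trans _ (gi f p k)); auto|].
    apply (sl2_posdef (gi f p k)); auto. apply gi_posdef; auto. }
  rewrite sum_swap. apply sum_ext. intros i Hi. apply in_seq in Hi.
  transitivity (theta (gi f p i) n * sum_list (map (fun F => if decb (sl2_equiv (gi f p i) F) then 1 else 0) R)).
  { rewrite <- sum_scal. apply sum_ext. intros F _. destruct (decb _); ring. }
  unfold primb. destruct (fv (a,b,c) (vi i) mod p =? 0) eqn:E; cbn [negb].
  - transitivity (theta (gi f p i) n * 0); [|ring]. f_equal.
    transitivity (sum_list (map (fun _ : form => 0) R)); [|apply sum_zero].
    apply sum_ext. intros F HF. destruct (decb (sl2_equiv (gi f p i) F)) eqn:E'; auto.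
    apply (proj1 (decb_true _)) in E'. exfalso.
    destruct (H1 F HF) as [HprF _].
    assert (Hpri : primitive (gi f p i)) by (eapply sl2_prim; eauto).
    apply (gi_prim f p i Hpr Hp) in Hpri; [|lia]. apply Hpri. apply divb; auto; lia.
  - rewrite count_one; [ring|auto|].
    apply H2; [unfold gi; apply nth_In; rewrite psi_length; lia|].
    apply (gi_prim f p i Hpr Hp); [lia|]. apply divb_false; auto; lia.
Qed.

End M.


Theorem theorem5p1 (a b c p : Z) (R : list form) :
  pos_def (a, b, c) ->
  primitive (a, b, c) ->
  prime p ->
  reps_of_classes R (psi_list (a, b, c) p) ->
  forall n : nat,
    wD (disc (a, b, c)) * sum_list (map (fun F => theta F n) R)
    = (p - kronecker_prime (disc (a, b, c)) p) * subst_pow (p ^ 2) (theta (a, b, c)) n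
      + theta (a, b, c) n - Pmr p 0 (theta (a, b, c)) n.
Proof.
  intros Hf Hpr Hp HR n.
  rewrite (stepM a b c p Hf Hpr Hp R n HR).
  apply stepL; auto.
Qed.
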